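(* Let $X$ be an FK-space containing $\phi$. Then $X$ has $F\sigma_p^q[K]$ if and only if $\overline{\phi}$ (the closure of $\phi$ in $X$) has $\sigma_p^q[K]$ and $X\subseteq(\overline{\phi})^{dd}$.
   Context: An FK-space is a vector subspace of the space $w$ of all complex sequences with a complete metrizable locally convex topology in which coordinate functionals are continuous; $X'$ is its continuous dual. $\delta^j$ has $1$ in position $j$, $0$ elsewhere; $\phi=\operatorname{span}\{\delta^j\}$. $p(n)<q(n)$ are nonnegative integer sequences with $q(n)\to\infty$. For $x\in w$, $x^{(k)}=\sum_{j=1}^kx_j\delta^j$; a subset $Y\subseteq X$ has $\sigma_p^q[K]$ if $\frac{1}{q(n)-p(n)}\sum_{k=p(n)+1}^{q(n)}x^{(k)}\to x$ in $X$ for every $x\in Y$. $\sigma_p^q[s]=\{x:\lim_n\frac{1}{q(n)-p(n)}\sum_{k=p(n)+1}^{q(n)}\sum_{j=1}^kx_j\text{ exists}\}$; for $E\subseteq w$, $E^d=\{x\in w:(x_ny_n)_n\in\sigma_p^q[s]\ \forall y\in E\}$, $E^{dd}=(E^d)^d$. $D_p^qF^+(X)=\{x\in w:\lim_n\frac{1}{q(n)-p(n)}\sum_{k=p(n)+1}^{q(n)}\sum_{j=1}^kx_jf(\delta^j)\text{ exists }\forall f\in X'\}$. $X$ has $F\sigma_p^q[K]$ if $X\subseteq D_p^qF^+(X)$. *)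

(* Defs.v *)
From Stdlib Require Import Reals Lra Lia.
From Coquelicot Require Import Coquelicot.
Open Scope R_scope.

(** Complex sequences: the space w.  Indices are 0-based: the paper's
    coordinate x_j (j >= 1) is [x (j-1)]. *)
Definition cseq := nat -> C.

Definition szero : cseq := fun _ => RtoC 0.
Definition sadd (x y : cseq) : cseq := fun j => Cplus (x j) (y j).
Definition ssub (x y : cseq) : cseq := fun j => Cminus (x j) (y j).
Definition sscal (c : C) (x : cseq) : cseq := fun j => Cmult c (x j).

Definition Ccv (u : nat -> C) (l : C) : Prop :=
  forall eps : R, 0 < eps -> exists N : nat, forall n : nat, (N <= n)%nat ->
    Cmod (Cminus (u n) l) < eps.

Fixpoint csum (g : nat -> C) (n : nat) : C :=
  match n with O => RtoC 0 | S m => Cplus (csum g m) (g m) end.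
Definition csum_range (g : nat -> C) (a b : nat) : C :=
  csum (fun i => g (a + i)%nat) (b - a).

(** delta^j, phi, sections x^(k) = sum_{j<=k} x_j delta^j (first k coordinates). *)
Definition delta (j : nat) : cseq := fun i => if Nat.eqb i j then RtoC 1 else RtoC 0.
Definition in_phi (x : cseq) : Prop := exists N : nat, forall j, (N <= j)%nat -> x j = RtoC 0.
Definition section (k : nat) (x : cseq) : cseq := fun j => if Nat.ltb j k then x j else RtoC 0.

Definition pqmean (p q : nat -> nat) (n : nat) (g : nat -> C) : C :=
  Cmult (Cinv (RtoC (INR (q n - p n)))) (csum_range g (S (p n)) (S (q n))).

(** A (metrizable, locally convex) topology on the subspace X of w is given by a
    countable family of seminorms [sn k] (k : nat).  In a metrizable space the
    topology is determined by convergent sequences, so convergence, closure,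
    continuity and completeness are expressed sequentially. *)
Definition seq_conv (sn : nat -> cseq -> R) (u : nat -> cseq) (x : cseq) : Prop :=
  forall k : nat, Un_cv (fun n => sn k (ssub (u n) x)) 0.

Definition is_FK (X : cseq -> Prop) (sn : nat -> cseq -> R) : Prop :=
  X szero /\
  (forall x y, X x -> X y -> X (sadd x y)) /\
  (forall c x, X x -> X (sscal c x)) /\
  (forall k x, X x -> 0 <= sn k x) /\
  (forall k x y, X x -> X y -> sn k (sadd x y) <= sn k x + sn k y) /\
  (forall k c x, X x -> sn k (sscal c x) = Cmod c * sn k x) /\
  (forall u : nat -> cseq, (forall n, X (u n)) ->
     (forall k eps, 0 < eps -> exists N : nat, forall m n, (N <= m)%nat -> (N <= n)%nat ->
         sn k (ssub (u m) (u n)) < eps) ->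
     exists x, X x /\ seq_conv sn u x) /\
  (forall (u : nat -> cseq) (x : cseq), (forall n, X (u n)) -> X x ->
     seq_conv sn u x -> forall j, Ccv (fun n => u n j) (x j)).

Definition in_dual (X : cseq -> Prop) (sn : nat -> cseq -> R) (f : cseq -> C) : Prop :=
  (forall x y, X x -> X y -> f (sadd x y) = Cplus (f x) (f y)) /\
  (forall c x, X x -> f (sscal c x) = Cmult c (f x)) /\
  (forall (u : nat -> cseq) (x : cseq), (forall n, X (u n)) -> X x ->
     seq_conv sn u x -> Ccv (fun n => f (u n)) (f x)).

Definition phi_closure (X : cseq -> Prop) (sn : nat -> cseq -> R) (x : cseq) : Prop :=
  X x /\ exists u : nat -> cseq, (forall n, in_phi (u n)) /\ seq_conv sn u x.

Definition has_sigmaK (sn : nat -> cseq -> R) (p q : nat -> nat) (Y : cseq -> Prop) : Prop :=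
  forall x, Y x ->
    seq_conv sn (fun n => fun j => pqmean p q n (fun k => section k x j)) x.

Definition sigma_s (p q : nat -> nat) (x : cseq) : Prop :=
  exists l : C, Ccv (fun n => pqmean p q n (fun k => csum x k)) l.

Definition dual_d (p q : nat -> nat) (E : cseq -> Prop) (x : cseq) : Prop :=
  forall y, E y -> sigma_s p q (fun n => Cmult (x n) (y n)).

Definition DF (X : cseq -> Prop) (sn : nat -> cseq -> R) (p q : nat -> nat) (x : cseq) : Prop :=
  forall f, in_dual X sn f ->
    exists l : C, Ccv (fun n => pqmean p q n
                          (fun k => csum (fun j => Cmult (x j) (f (delta j))) k)) l.

Definition has_FsigmaK (X : cseq -> Prop) (sn : nat -> cseq -> R) (p q : nat -> nat) : Prop :=
  forall x, X x -> DF X sn p q x.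

(* Main.v *)
Require Import Defs.
From Stdlib Require Import Reals Lra Lia Arith.
From Coquelicot Require Import Coquelicot.
From Stdlib Require Import FunctionalExtensionality ClassicalEpsilon Classical.
From mathcomp Require boolp classical_sets.
Open Scope R_scope.


Lemma cseq_ext (x y : cseq) : (forall j, x j = y j) -> x = y.
Proof. intros H; extensionality j; apply H. Qed.

Lemma choice_nat {A : Type} (P : nat -> A -> Prop) :
  (forall n, exists a, P n a) -> exists f : nat -> A, forall n, P n (f n).
Proof.
  intros H. exists (fun n => proj1_sig (constructive_indefinite_description _ (H n))).
  intros n. exact (proj2_sig (constructive_indefinite_description _ (H n))).
Qed.

Lemma choice_gen {A B : Type} (P : A -> B -> Prop) :
  (forall n, exists a, P n a) -> exists f : A -> B, forall n, P n (f n).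
Proof.
  intros H. exists (fun n => proj1_sig (constructive_indefinite_description _ (H n))).
  intros n. exact (proj2_sig (constructive_indefinite_description _ (H n))).
Qed.

Lemma Cmod_im_le (c : C) : Rabs (Im c) <= Cmod c.
Proof.
  destruct c as [a b]. unfold Cmod, Im; simpl.
  rewrite <- sqrt_Rsqr_abs. apply sqrt_le_1_alt. unfold Rsqr. nra.
Qed.

Lemma Cmod_re_le (c : C) : Rabs (Re c) <= Cmod c.
Proof. apply re_le_Cmod. Qed.

Lemma Cmod_sub_sym (a b : C) : Cmod (Cminus a b) = Cmod (Cminus b a).
Proof.
  replace (Cminus a b) with (Copp (Cminus b a)) by ring. apply Cmod_opp.
Qed.

Lemma Cmod_RtoC_pos (t : R) : 0 <= t -> Cmod (RtoC t) = t.
Proof. intros; rewrite Cmod_R; apply Rabs_right; lra. Qed.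

Lemma Cmod_tri_sub (a b c : C) : Cmod (Cminus a c) <= Cmod (Cminus a b) + Cmod (Cminus b c).
Proof.
  replace (Cminus a c) with (Cplus (Cminus a b) (Cminus b c)) by ring. apply Cmod_triangle.
Qed.

Lemma Cmod_rev_tri (a b : C) : Cmod a <= Cmod b + Cmod (Cminus a b).
Proof.
  replace a with (Cplus b (Cminus a b)) at 1 by ring. apply Cmod_triangle.
Qed.

Lemma Ccv_unique (u : nat -> C) l1 l2 : Ccv u l1 -> Ccv u l2 -> l1 = l2.
Proof.
  intros H1 H2.
  destruct (Req_dec (Cmod (Cminus l1 l2)) 0) as [E|E].
  - apply Cmod_eq_0 in E. replace l1 with (Cplus (Cminus l1 l2) l2) by ring. rewrite E. ring.
  - assert (P : 0 < Cmod (Cminus l1 l2)) by (pose proof (Cmod_ge_0 (Cminus l1 l2)); lra).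
    assert (P2 : 0 < Cmod (Cminus l1 l2) / 2) by lra.
    destruct (H1 _ P2) as [N1 HN1].
    destruct (H2 _ P2) as [N2 HN2].
    specialize (HN1 (max N1 N2) ltac:(lia)). specialize (HN2 (max N1 N2) ltac:(lia)).
    pose proof (Cmod_tri_sub l1 (u (max N1 N2)) l2).
    rewrite (Cmod_sub_sym l1 (u (max N1 N2))) in H. lra.
Qed.

Lemma Ccv_ext (u v : nat -> C) l : (forall n, u n = v n) -> Ccv u l -> Ccv v l.
Proof. intros E H eps He. destruct (H eps He) as [N HN]. exists N. intros n Hn. rewrite <- E. auto. Qed.

Lemma Ccv_const (c : C) : Ccv (fun _ => c) c.
Proof. intros eps He. exists 0%nat. intros. replace (Cminus c c) with (RtoC 0) by ring. rewrite Cmod_0. lra. Qed.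

Lemma Ccv_plus (u v : nat -> C) a b : Ccv u a -> Ccv v b -> Ccv (fun n => Cplus (u n) (v n)) (Cplus a b).
Proof.
  intros Hu Hv eps He.
  assert (P2 : 0 < eps / 2) by lra.
  destruct (Hu _ P2) as [N1 H1]. destruct (Hv _ P2) as [N2 H2].
  exists (max N1 N2). intros n Hn.
  replace (Cminus (Cplus (u n) (v n)) (Cplus a b)) with (Cplus (Cminus (u n) a) (Cminus (v n) b)) by ring.
  pose proof (Cmod_triangle (Cminus (u n) a) (Cminus (v n) b)).
  specialize (H1 n ltac:(lia)). specialize (H2 n ltac:(lia)). lra.
Qed.

Lemma Ccv_scal (u : nat -> C) a c : Ccv u a -> Ccv (fun n => Cmult c (u n)) (Cmult c a).
Proof.
  intros Hu eps He.
  assert (P : 0 < eps / (Cmod c + 1)) by (apply Rdiv_lt_0_compat; [lra| pose proof (Cmod_ge_0 c); lra]).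
  destruct (Hu _ P) as [N H]. exists N. intros n Hn.
  replace (Cminus (Cmult c (u n)) (Cmult c a)) with (Cmult c (Cminus (u n) a)) by ring.
  rewrite Cmod_mult. specialize (H n Hn).
  pose proof (Cmod_ge_0 c). pose proof (Cmod_ge_0 (Cminus (u n) a)).
  apply Rle_lt_trans with ((Cmod c + 1) * Cmod (Cminus (u n) a)). nra.
  apply Rmult_lt_compat_l with (r := Cmod c + 1) in H; [|lra].
  replace ((Cmod c + 1) * (eps / (Cmod c + 1))) with eps in H by (field; lra). exact H.
Qed.

Lemma Ccv_le (u : nat -> C) l b M N : Ccv u l -> (forall n, (N <= n)%nat -> Cmod (Cminus (u n) b) <= M) ->
  Cmod (Cminus l b) <= M.
Proof.
  intros Hu HM. apply Rnot_lt_le. intros Hlt.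
  assert (P : 0 < Cmod (Cminus l b) - M) by lra.
  destruct (Hu _ P) as [N1 H1]. specialize (H1 (max N N1) ltac:(lia)).
  specialize (HM (max N N1) ltac:(lia)).
  pose proof (Cmod_tri_sub l (u (max N N1)) b).
  rewrite (Cmod_sub_sym l (u (max N N1))) in H. lra.
Qed.

Lemma Ccv_le0 (u : nat -> C) l M : Ccv u l -> (forall n, Cmod (u n) <= M) -> Cmod l <= M.
Proof.
  intros Hu HM. replace l with (Cminus l 0) by ring. apply (Ccv_le u l 0 M 0); auto.
  intros n _. replace (Cminus (u n) 0) with (u n) by ring. auto.
Qed.

Lemma bounded_init (a : nat -> R) N : exists M, forall n, (n < N)%nat -> a n <= M.
Proof.
  induction N as [|N IH].
  - exists 0. intros; lia.
  - destruct IH as [M HM]. exists (Rmax M (a N)). intros n Hn.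
    destruct (Nat.eq_dec n N) as [->|ne]. apply Rmax_r.
    eapply Rle_trans; [apply HM; lia| apply Rmax_l].
Qed.

Lemma Ccv_bounded (u : nat -> C) l : Ccv u l -> exists M, forall n, Cmod (u n) <= M.
Proof.
  intros Hu. destruct (Hu 1 Rlt_0_1) as [N HN].
  destruct (bounded_init (fun n => Cmod (u n)) N) as [M HM].
  exists (Rmax M (Cmod l + 1)). intros n.
  destruct (le_lt_dec N n) as [h|h].
  - specialize (HN n h). pose proof (Cmod_rev_tri (u n) l). eapply Rle_trans; [|apply Rmax_r]. lra.
  - eapply Rle_trans; [apply HM; auto| apply Rmax_l].
Qed.

Lemma Ccauchy_cv (u : nat -> C) :
  (forall eps, 0 < eps -> exists N, forall m n, (N <= m)%nat -> (N <= n)%nat -> Cmod (Cminus (u m) (u n)) < eps) ->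
  exists l, Ccv u l.
Proof.
  intros H.
  assert (CR : Cauchy_crit (fun n => Re (u n))).
  { intros eps He. destruct (H eps He) as [N HN]. exists N. intros m n Hm Hn.
    unfold R_dist. eapply Rle_lt_trans; [|apply (HN m n); lia].
    replace (Re (u m) - Re (u n)) with (Re (Cminus (u m) (u n))).
    apply Cmod_re_le. unfold Cminus, Re; simpl. destruct (u m), (u n); simpl. ring. }
  assert (CI : Cauchy_crit (fun n => Im (u n))).
  { intros eps He. destruct (H eps He) as [N HN]. exists N. intros m n Hm Hn.
    unfold R_dist. eapply Rle_lt_trans; [|apply (HN m n); lia].
    replace (Im (u m) - Im (u n)) with (Im (Cminus (u m) (u n))).
    apply Cmod_im_le. unfold Cminus, Im; simpl. destruct (u m), (u n); simpl. ring. }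
  destruct (Rcomplete.R_complete _ CR) as [a Ha]. destruct (Rcomplete.R_complete _ CI) as [b Hb].
  exists (a, b). intros eps He.
  assert (P : 0 < eps / 2) by lra.
  destruct (Ha _ P) as [N1 H1]. destruct (Hb _ P) as [N2 H2].
  exists (max N1 N2). intros n Hn.
  specialize (H1 n ltac:(lia)). specialize (H2 n ltac:(lia)). unfold R_dist in *.
  assert (S2 : sqrt 2 <= 2). { rewrite <- (sqrt_square 2) at 2 by lra. apply sqrt_le_1_alt. lra. }
  eapply Rle_lt_trans. apply Cmod_2Rmax.
  destruct (u n) as [x y] eqn:E. unfold Re, Im in *. simpl in *.
  replace (x + - a) with (x - a) by ring. replace (y + - b) with (y - b) by ring.
  pose proof (Rabs_pos (x - a)). pose proof (Rabs_pos (y - b)).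
  unfold Rmax. destruct (Rle_dec _ _); nra.
Qed.


Lemma csum_ext_lt (g h : nat -> C) n : (forall j, (j < n)%nat -> g j = h j) -> csum g n = csum h n.
Proof. induction n; simpl; intros H; auto. rewrite IHn by (intros; apply H; lia). rewrite H by lia. auto. Qed.

Lemma csum_plus (g h : nat -> C) n : csum (fun i => Cplus (g i) (h i)) n = Cplus (csum g n) (csum h n).
Proof. induction n; simpl. ring. rewrite IHn. ring. Qed.

Lemma csum_scal (g : nat -> C) c n : csum (fun i => Cmult c (g i)) n = Cmult c (csum g n).
Proof. induction n; simpl. ring. rewrite IHn. ring. Qed.

Lemma csum_zero n : csum (fun _ => RtoC 0) n = RtoC 0.
Proof. induction n; simpl; auto. rewrite IHn. ring. Qed.

Lemma csum_swap (G : nat -> nat -> C) M N :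
  csum (fun i => csum (fun j => G i j) N) M = csum (fun j => csum (fun i => G i j) M) N.
Proof.
  induction M; simpl. symmetry. apply csum_zero.
  rewrite IHM. rewrite <- csum_plus. auto.
Qed.

Lemma csum_const1 n : csum (fun _ => RtoC 1) n = RtoC (INR n).
Proof. induction n. simpl; auto.
  change (csum (fun _ => RtoC 1) (S n)) with (Cplus (csum (fun _ => RtoC 1) n) (RtoC 1)).
  rewrite IHn, S_INR, RtoC_plus. auto. Qed.

Lemma csum_delta (a : nat -> C) i N :
  csum (fun j => Cmult (a j) (delta j i)) N = if Nat.ltb i N then a i else RtoC 0.
Proof.
  induction N; simpl. auto.
  rewrite IHN. unfold delta.
  destruct (Nat.ltb_spec i N); destruct (Nat.ltb_spec i (S N)); destruct (Nat.eqb_spec i N);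
  try lia; subst; ring.
Qed.

Definition indc (j k : nat) : C := if Nat.ltb j k then RtoC 1 else RtoC 0.

Lemma csum_ind (a : nat -> C) k N : (k <= N)%nat ->
  csum a k = csum (fun j => Cmult (indc j k) (a j)) N.
Proof.
  induction N; intros H.
  - replace k with 0%nat by lia. auto.
  - destruct (Nat.eq_dec k (S N)) as [->|ne].
    + simpl. replace (indc N (S N)) with (RtoC 1).
      2:{ unfold indc. rewrite (proj2 (Nat.ltb_lt N (S N))) by lia. auto. }
      f_equal. 2: ring. apply csum_ext_lt. intros j Hj. unfold indc.
      rewrite (proj2 (Nat.ltb_lt j (S N))) by lia. ring.
    + simpl. rewrite IHN by lia. replace (indc N k) with (RtoC 0).
      ring. unfold indc. rewrite (proj2 (Nat.ltb_ge N k)) by lia. auto.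
Qed.

Fixpoint rsum (a : nat -> R) (n : nat) : R :=
  match n with O => 0 | S m => rsum a m + a m end.

Lemma rsum_nonneg (a : nat -> R) n : (forall i, (i < n)%nat -> 0 <= a i) -> 0 <= rsum a n.
Proof. induction n; simpl; intros H. lra. pose proof (H n ltac:(lia)). pose proof (IHn ltac:(intros; apply H; lia)). lra. Qed.

Lemma rsum_le (a b : nat -> R) n : (forall i, (i < n)%nat -> a i <= b i) -> rsum a n <= rsum b n.
Proof. induction n; simpl; intros H. lra. pose proof (H n ltac:(lia)). pose proof (IHn ltac:(intros; apply H; lia)). lra. Qed.

Lemma rsum_ge_term (a : nat -> R) n i : (forall i, (i < n)%nat -> 0 <= a i) -> (i < n)%nat -> a i <= rsum a n.
Proof.
  induction n; simpl; intros H Hi. lia.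
  destruct (Nat.eq_dec i n) as [->|ne].
  - pose proof (rsum_nonneg a n ltac:(intros; apply H; lia)). lra.
  - pose proof (IHn ltac:(intros; apply H; lia) ltac:(lia)). pose proof (H n ltac:(lia)). lra.
Qed.

Lemma rsum_scal (a : nat -> R) c n : rsum (fun i => c * a i) n = c * rsum a n.
Proof. induction n; simpl. ring. rewrite IHn. ring. Qed.

Lemma rsum_plus (a b : nat -> R) n : rsum (fun i => a i + b i) n = rsum a n + rsum b n.
Proof. induction n; simpl. ring. rewrite IHn. ring. Qed.

Lemma csum_mod (g : nat -> C) n : Cmod (csum g n) <= rsum (fun i => Cmod (g i)) n.
Proof.
  induction n; simpl. rewrite Cmod_0. lra.
  eapply Rle_trans. apply Cmod_triangle. lra.
Qed.

Lemma rsum_cv0 (a : nat -> nat -> R) N :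
  (forall i, (i < N)%nat -> Un_cv (fun n => a n i) 0) -> Un_cv (fun n => rsum (a n) N) 0.
Proof.
  induction N; intros H; simpl.
  - intros eps He. exists 0%nat. intros. unfold R_dist. rewrite Rminus_0_r, Rabs_R0. auto.
  - replace 0 with (0 + 0) by ring. apply CV_plus. apply IHN. intros; apply H; lia. apply H; lia.
Qed.

Lemma Un_cv_squeeze0 (a b : nat -> R) : (forall n, 0 <= a n <= b n) -> Un_cv b 0 -> Un_cv a 0.
Proof.
  intros H Hb eps He. destruct (Hb eps He) as [N HN]. exists N. intros n Hn.
  specialize (HN n Hn). specialize (H n). unfold R_dist in *. rewrite Rminus_0_r in *.
  rewrite Rabs_right in * by lra. lra.
Qed.


Section FKbasics.
Variables (X : cseq -> Prop) (sn : nat -> cseq -> R).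
Hypothesis HFK : is_FK X sn.

Lemma X_zero : X szero. Proof. apply HFK. Qed.
Lemma X_add x y : X x -> X y -> X (sadd x y). Proof. apply HFK. Qed.
Lemma X_scal c x : X x -> X (sscal c x). Proof. apply HFK. Qed.
Lemma sn_nonneg k x : X x -> 0 <= sn k x. Proof. apply HFK. Qed.
Lemma sn_tri k x y : X x -> X y -> sn k (sadd x y) <= sn k x + sn k y. Proof. apply HFK. Qed.
Lemma sn_hom k c x : X x -> sn k (sscal c x) = Cmod c * sn k x. Proof. apply HFK. Qed.
Lemma X_coord (u : nat -> cseq) x : (forall n, X (u n)) -> X x -> seq_conv sn u x ->
  forall j, Ccv (fun n => u n j) (x j).
Proof. apply HFK. Qed.

Lemma ssub_alt x y : ssub x y = sadd x (sscal (Copp (RtoC 1)) y).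
Proof. apply cseq_ext; intros j; unfold ssub, sadd, sscal. ring. Qed.

Lemma X_sub x y : X x -> X y -> X (ssub x y).
Proof. intros; rewrite ssub_alt. apply X_add; auto. apply X_scal; auto. Qed.

Lemma sn_zero k : sn k szero = 0.
Proof.
  replace szero with (sscal (RtoC 0) szero) by (apply cseq_ext; intros; unfold sscal, szero; ring).
  rewrite sn_hom by apply X_zero. rewrite Cmod_0. ring.
Qed.

Lemma sn_opp k x : X x -> sn k (sscal (Copp (RtoC 1)) x) = sn k x.
Proof. intros; rewrite sn_hom by auto. rewrite Cmod_opp, Cmod_1. ring. Qed.

Lemma sn_sub_sym k a b : X a -> X b -> sn k (ssub a b) = sn k (ssub b a).
Proof.
  intros. replace (ssub a b) with (sscal (Copp (RtoC 1)) (ssub b a)).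
  apply sn_opp; apply X_sub; auto.
  apply cseq_ext; intros j; unfold ssub, sscal. ring.
Qed.

Lemma sn_sub_tri k a b c : X a -> X b -> X c -> sn k (ssub a c) <= sn k (ssub a b) + sn k (ssub b c).
Proof.
  intros. replace (ssub a c) with (sadd (ssub a b) (ssub b c)).
  apply sn_tri; apply X_sub; auto.
  apply cseq_ext; intros j; unfold ssub, sadd. ring.
Qed.

Lemma sn_rev k a b : X a -> X b -> sn k a <= sn k b + sn k (ssub a b).
Proof.
  intros. replace a with (sadd b (ssub a b)) at 1.
  apply sn_tri; auto. apply X_sub; auto.
  apply cseq_ext; intros j; unfold ssub, sadd. ring.
Qed.

Lemma sn_rscal k t x : 0 <= t -> X x -> sn k (sscal (RtoC t) x) = t * sn k x.
Proof. intros. rewrite sn_hom by auto. rewrite Cmod_RtoC_pos; auto. Qed.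

Lemma sn_sub0 k x : sn k (ssub x szero) = sn k x.
Proof. f_equal. apply cseq_ext; intros j; unfold ssub, szero. ring. Qed.

Definition vsum (G : nat -> cseq) (n : nat) : cseq := fun j => csum (fun i => G i j) n.

Lemma X_vsum G n : (forall i, (i < n)%nat -> X (G i)) -> X (vsum G n).
Proof.
  induction n; intros H.
  - replace (vsum G 0) with szero by (apply cseq_ext; intros; reflexivity). apply X_zero.
  - change (vsum G (S n)) with (sadd (vsum G n) (G n)). apply X_add. apply IHn; intros; apply H; lia. apply H; lia.
Qed.

Lemma sn_vsum k G n : (forall i, (i < n)%nat -> X (G i)) -> sn k (vsum G n) <= rsum (fun i => sn k (G i)) n.
Proof.
  induction n; intros H.
  - replace (vsum G 0) with szero by (apply cseq_ext; intros; reflexivity). rewrite sn_zero. simpl; lra.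
  - change (vsum G (S n)) with (sadd (vsum G n) (G n)). simpl.
    eapply Rle_trans. apply sn_tri. apply X_vsum; intros; apply H; lia. apply H; lia.
    pose proof (IHn ltac:(intros; apply H; lia)). lra.
Qed.

Definition linX (f : cseq -> C) : Prop :=
  (forall x y, X x -> X y -> f (sadd x y) = Cplus (f x) (f y)) /\
  (forall c x, X x -> f (sscal c x) = Cmult c (f x)).

Lemma lin_zero f : linX f -> f szero = RtoC 0.
Proof.
  intros [_ H]. replace szero with (sscal (RtoC 0) szero) by (apply cseq_ext; intros; unfold sscal, szero; ring).
  rewrite H by apply X_zero. ring.
Qed.

Lemma lin_vsum f G n : linX f -> (forall i, (i < n)%nat -> X (G i)) -> f (vsum G n) = csum (fun i => f (G i)) n.
Proof.
  intros Hf. induction n; intros H.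
  - replace (vsum G 0) with szero by (apply cseq_ext; intros; reflexivity). apply lin_zero; auto.
  - change (vsum G (S n)) with (sadd (vsum G n) (G n)). simpl.
    rewrite (proj1 Hf). rewrite IHn. auto. intros; apply H; lia.
    apply X_vsum; intros; apply H; lia. apply H; lia.
Qed.

Lemma lin_sub f x y : linX f -> X x -> X y -> f (ssub x y) = Cminus (f x) (f y).
Proof.
  intros Hf Hx Hy. rewrite ssub_alt. rewrite (proj1 Hf); auto. rewrite (proj2 Hf); auto.
  ring. apply X_scal; auto.
Qed.

End FKbasics.

Lemma phi_delta j : in_phi (delta j).
Proof. exists (S j). intros i Hi. unfold delta. destruct (Nat.eqb_spec i j); auto. lia. Qed.


Definition cc (p q : nat -> nat) n j : C := pqmean p q n (fun k => indc j k).
Definition Tsec (p q : nat -> nat) n (w : cseq) : cseq := fun j => pqmean p q n (fun k => section k w j).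

Lemma pqmean_scal_r p q n g c : pqmean p q n (fun k => Cmult (g k) c) = Cmult (pqmean p q n g) c.
Proof.
  unfold pqmean, csum_range.
  rewrite (csum_ext_lt _ (fun i => Cmult c (g (S (p n) + i)%nat))) by (intros; ring).
  rewrite csum_scal. ring.
Qed.

Lemma Tsec_eq p q n w j : Tsec p q n w j = Cmult (cc p q n j) (w j).
Proof.
  unfold Tsec, cc. rewrite <- pqmean_scal_r. f_equal. extensionality k.
  unfold section, indc. destruct (Nat.ltb j k); ring.
Qed.

Lemma cc_zero p q n j : (q n <= j)%nat -> cc p q n j = RtoC 0.
Proof.
  intros H. unfold cc, pqmean, csum_range.
  rewrite (csum_ext_lt _ (fun _ => RtoC 0)). rewrite csum_zero. ring.
  intros i Hi. unfold indc. destruct (Nat.ltb_spec j (S (p n) + i)); auto. lia.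
Qed.

Lemma Tsec_vsum p q n w : Tsec p q n w = vsum (fun j => sscal (Cmult (cc p q n j) (w j)) (delta j)) (q n).
Proof.
  apply cseq_ext; intros i. unfold vsum, sscal.
  rewrite csum_delta. rewrite Tsec_eq. destruct (Nat.ltb_spec i (q n)); auto.
  rewrite cc_zero by lia. ring.
Qed.

Lemma Tsec_phi p q n w : in_phi (Tsec p q n w).
Proof. exists (q n). intros j Hj. rewrite Tsec_eq, cc_zero by lia. ring. Qed.

Lemma mean_csum p q n (a : nat -> C) :
  pqmean p q n (fun k => csum a k) = csum (fun j => Cmult (cc p q n j) (a j)) (q n).
Proof.
  unfold pqmean, csum_range, cc.
  rewrite (csum_ext_lt (fun i => csum a (S (p n) + i))
            (fun i => csum (fun j => Cmult (indc j (S (p n) + i)) (a j)) (q n))).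
  2:{ intros i Hi. apply csum_ind. lia. }
  rewrite csum_swap. rewrite <- csum_scal. apply csum_ext_lt. intros j Hj.
  unfold pqmean, csum_range.
  rewrite (csum_ext_lt _ (fun i => Cmult (a j) (indc j (S (p n) + i)))) by (intros; ring).
  rewrite csum_scal. ring.
Qed.

Section Tlin.
Variables (X : cseq -> Prop) (sn : nat -> cseq -> R).
Hypothesis HFK : is_FK X sn.
Hypothesis Hphi : forall x, in_phi x -> X x.

Lemma X_Tn p q n w : X (Tsec p q n w).
Proof. apply Hphi, Tsec_phi. Qed.

Lemma X_delta j : X (delta j).
Proof. apply Hphi, phi_delta. Qed.

Lemma f_Tn p q n w f : linX X f ->
  f (Tsec p q n w) = pqmean p q n (fun k => csum (fun j => Cmult (w j) (f (delta j))) k).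
Proof.
  intros Hf. rewrite mean_csum. rewrite Tsec_vsum. rewrite (lin_vsum X sn HFK); auto.
  - apply csum_ext_lt. intros j _. rewrite (proj2 Hf). ring. apply X_delta.
  - intros i _. apply X_scal with sn; auto. apply X_delta.
Qed.
End Tlin.

Lemma RtoC_neq0 (r : R) : r <> 0 -> RtoC r <> RtoC 0.
Proof. intros H E. apply H. apply (f_equal Re) in E. simpl in E. exact E. Qed.

Lemma rsum_S a n : rsum a (S n) = rsum a n + a n.
Proof. reflexivity. Qed.

Lemma rsum_count p j m :
  rsum (fun i => if Nat.leb (S p + i) j then 1 else 0) m <= INR (Nat.min m (j - p)).
Proof.
  induction m. simpl; lra. rewrite rsum_S. cbv beta.
  destruct (Nat.leb_spec (S p + m) j).
  - replace (Nat.min (S m) (j - p)) with (S (Nat.min m (j - p))) by lia. rewrite S_INR. lra.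
  - eapply Rle_trans. 2: apply le_INR; apply (Nat.min_le_compat_r m (S m)); lia. lra.
Qed.

Lemma one_minus_cc_bound p q n j : (p n < q n)%nat ->
  Cmod (Cminus (cc p q n j) (RtoC 1)) <= INR (Nat.min (q n - p n) (j - p n)) / INR (q n - p n).
Proof.
  intros Hpq. set (m := (q n - p n)%nat).
  assert (Hm : 0 < INR m) by (apply lt_0_INR; unfold m; lia).
  assert (E : Cminus (cc p q n j) (RtoC 1) =
     Cmult (Cinv (RtoC (INR m))) (Copp (csum (fun i => Cminus (RtoC 1) (indc j (S (p n) + i))) m))).
  { unfold cc, pqmean, csum_range. fold m.
    replace (S (q n) - S (p n))%nat with m by (unfold m; lia).
    unfold Cminus at 2. rewrite csum_plus. rewrite csum_const1.
    rewrite (csum_ext_lt (fun i => Copp (indc j (S (p n) + i))) (fun i => Cmult (Copp (RtoC 1)) (indc j (S (p n) + i)))) by (intros; ring).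
    rewrite csum_scal. field. apply RtoC_neq0. lra. }
  rewrite E. rewrite Cmod_mult, Cmod_opp. rewrite Cmod_inv by (apply RtoC_neq0; lra).
  rewrite Cmod_R, Rabs_right by lra.
  unfold Rdiv. rewrite Rmult_comm. apply Rmult_le_compat_r. apply Rlt_le, Rinv_0_lt_compat; lra.
  eapply Rle_trans. apply csum_mod. eapply Rle_trans. 2: apply rsum_count.
  apply rsum_le. intros i _. unfold indc.
  destruct (Nat.ltb_spec j (S (p n) + i)); destruct (Nat.leb_spec (S (p n) + i) j); try lia.
  - replace (Cminus 1 1) with (RtoC 0) by ring. rewrite Cmod_0. lra.
  - replace (Cminus 1 0) with (RtoC 1) by ring. rewrite Cmod_1. lra.
Qed.

Lemma cc_cv p q : (forall n, (p n < q n)%nat) ->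
  (forall M : nat, exists N : nat, forall n, (N <= n)%nat -> (M <= q n)%nat) ->
  forall j, Ccv (fun n => cc p q n j) (RtoC 1).
Proof.
  intros Hpq Hq j eps He.
  destruct (INR_unbounded (INR j / eps)) as [M HM].
  destruct (Hq (j + M + 1)%nat) as [N HN]. exists N. intros n Hn.
  specialize (HN n Hn). eapply Rle_lt_trans. apply one_minus_cc_bound; auto.
  destruct (le_lt_dec j (p n)) as [h|h].
  - replace (j - p n)%nat with 0%nat by lia. rewrite Nat.min_0_r. simpl. unfold Rdiv. rewrite Rmult_0_l. auto.
  - assert (H1 : INR (Nat.min (q n - p n) (j - p n)) <= INR j) by (apply le_INR; lia).
    assert (H2 : INR (M + 1) <= INR (q n - p n)) by (apply le_INR; lia).
    rewrite plus_INR in H2. simpl in H2.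
    assert (H3 : INR j < eps * INR M).
    { apply Rmult_lt_compat_l with (r := eps) in HM; auto. unfold Rdiv in HM.
      replace (eps * (INR j * / eps)) with (INR j) in HM by (field; lra). lra. }
    pose proof (pos_INR M). pose proof (pos_INR (Nat.min (q n - p n) (j - p n))).
    apply Rmult_lt_reg_r with (INR (q n - p n)). lra.
    unfold Rdiv. rewrite Rmult_assoc, Rinv_l by lra. nra.
Qed.

Lemma Ccv_Un_cv (u : nat -> C) l : Ccv u l -> Un_cv (fun n => Cmod (Cminus (u n) l)) 0.
Proof.
  intros H eps He. destruct (H eps He) as [N HN]. exists N. intros n Hn.
  unfold R_dist. rewrite Rminus_0_r. rewrite Rabs_right by (apply Rle_ge, Cmod_ge_0). auto.
Qed.

Lemma Un_cv_scal0 (a : nat -> R) c : Un_cv a 0 -> Un_cv (fun n => a n * c) 0.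
Proof.
  intros H. replace 0 with (0 * c) by ring. apply CV_mult. auto.
  intros eps He. exists 0%nat. intros. unfold R_dist. rewrite Rminus_diag, Rabs_R0. auto.
Qed.

Section Tcv.
Variables (X : cseq -> Prop) (sn : nat -> cseq -> R).
Hypothesis HFK : is_FK X sn.
Hypothesis Hphi : forall x, in_phi x -> X x.

Lemma Tsec_cv_phi p q : (forall n, (p n < q n)%nat) ->
  (forall M : nat, exists N : nat, forall n, (N <= n)%nat -> (M <= q n)%nat) ->
  forall v, in_phi v -> seq_conv sn (fun n => Tsec p q n v) v.
Proof.
  intros Hpq Hq v Hv k. assert (Xv : X v) by auto. destruct Hv as [N HN].
  assert (E : forall n, ssub (Tsec p q n v) v =
     vsum (fun j => sscal (Cmult (Cminus (cc p q n j) (RtoC 1)) (v j)) (delta j)) N).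
  { intros n. apply cseq_ext; intros i. unfold vsum, sscal, ssub. rewrite csum_delta. rewrite Tsec_eq.
    destruct (Nat.ltb_spec i N). ring. rewrite HN by lia. ring. }
  apply Un_cv_squeeze0 with (fun n => rsum (fun j => Cmod (Cminus (cc p q n j) (RtoC 1)) * (Cmod (v j) * sn k (delta j))) N).
  - intros n. cbv beta. split. apply sn_nonneg with X; auto. apply X_sub with sn; auto. apply X_Tn; auto.
    rewrite E. eapply Rle_trans. apply sn_vsum with X; auto.
    intros; apply X_scal with sn; auto. apply X_delta; auto.
    apply rsum_le. intros i _. rewrite sn_hom with (X := X); auto. rewrite Cmod_mult. right; ring.
    apply X_delta; auto.
  - apply rsum_cv0. intros i _. apply Un_cv_scal0. apply Ccv_Un_cv. apply cc_cv; auto.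
Qed.
End Tcv.


Lemma inv_small (r : R) (m : nat) : 0 < r -> / r < INR m -> / INR m < r.
Proof.
  intros Hr H. assert (0 < / r) by (apply Rinv_0_lt_compat; auto).
  rewrite <- (Rinv_inv r).
  apply Rinv_lt_contravar. apply Rmult_lt_0_compat; lra. auto.
Qed.

Lemma inv_le_eventually (r : R) : 0 < r -> exists M, forall n, (M <= n)%nat -> / INR (S n) <= r.
Proof.
  intros Hr. destruct (INR_unbounded (/ r)) as [M HM]. exists M. intros n Hn.
  left. apply inv_small; auto. apply Rlt_le_trans with (INR M); auto. apply le_INR; lia.
Qed.

Section Baire.
Variables (V : Type) (Y : V -> Prop) (B : nat -> V -> R -> V -> Prop).
Hypothesis Bsym : forall j a b r, Y a -> Y b -> B j a r b -> B j b r a.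
Hypothesis Btri : forall j a b c r s, Y a -> Y b -> Y c -> B j a r b -> B j b s c -> B j a (r + s) c.
Hypothesis Brefl : forall j a, Y a -> B j a 0 a.
Hypothesis Bmono : forall j a b r s, Y a -> Y b -> r <= s -> B j a r b -> B j a s b.

Definition Ball x K r y := forall j, (j <= K)%nat -> B j x r y.
Definition bconv (u : nat -> V) x := forall j r, 0 < r -> exists N, forall n, (N <= n)%nat -> B j x r (u n).
Definition bclosed (Cs : V -> Prop) := forall u x, (forall n, Y (u n)) -> (forall n, Cs (u n)) -> Y x -> bconv u x -> Cs x.
Hypothesis Bcomplete : forall u, (forall n, Y (u n)) ->
  (forall j r, 0 < r -> exists N, forall m n, (N <= m)%nat -> (N <= n)%nat -> B j (u m) r (u n)) ->
  exists x, Y x /\ bconv u x.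

Lemma open_compl Cs y : bclosed Cs -> Y y -> ~ Cs y ->
  exists K r, 0 < r /\ forall z, Y z -> Ball y K r z -> ~ Cs z.
Proof.
  intros Hc Hy Hn. apply NNPP. intros Hno.
  assert (H : forall n, exists z, Y z /\ Ball y n (/ INR (S n)) z /\ Cs z).
  { intros n. apply NNPP. intros Hz. apply Hno. exists n, (/ INR (S n)). split.
    apply Rinv_0_lt_compat, lt_0_INR; lia.
    intros z Yz Bz Cz. apply Hz. exists z; auto. }
  destruct (choice_nat _ H) as [u Hu].
  apply Hn. apply (Hc u y); try (intros; apply Hu); auto.
  intros j r Hr. destruct (inv_le_eventually r Hr) as [M HM].
  exists (max j M). intros n Hn'. destruct (Hu n) as [Yn [Bn _]].
  apply Bmono with (/ INR (S n)); auto. apply HM; lia. apply Bn. lia.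
Qed.

Theorem baire (Cs : nat -> V -> Prop) : (exists y0, Y y0) -> (forall m, bclosed (Cs m)) ->
  (forall x, Y x -> exists m, Cs m x) ->
  exists m x K r, 0 < r /\ Y x /\ forall y, Y y -> Ball x K r y -> Cs m y.
Proof.
  intros [y0 Hy0] Hcl Hcov. apply NNPP. intros Hno.
  assert (H : forall m x K r, 0 < r -> Y x -> exists y, Y y /\ Ball x K r y /\ ~ Cs m y).
  { intros m x K r Hr Hx. apply NNPP. intros Hn. apply Hno. exists m, x, K, r. split; auto. split; auto.
    intros y Hy Hb. apply NNPP. intros Hc. apply Hn. exists y. auto. }
  set (valid := fun st : V * nat * R => Y (fst (fst st)) /\ 0 < snd st).
  set (spec := fun (m : nat) (st st' : V * nat * R) =>
     let '(x, K, r) := st in let '(x', K', r') := st' in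
     Y x' /\ 0 < r' /\ (K <= K')%nat /\ (m <= K')%nat /\ r' <= r / 2 /\ r' <= / INR (S m) /\
     Ball x K (r / 2) x' /\ (forall z, Y z -> Ball x' K' (2 * r') z -> ~ Cs m z)).
  assert (Hstep : forall (ms : nat * (V * nat * R)), exists st', valid (snd ms) -> spec (fst ms) (snd ms) st').
  { intros [m [[x K] r]]. simpl.
    destruct (classic (valid (x, K, r))) as [[Hx Hr]|Hv].
    2:{ exists (x, K, r). intros; contradiction. }
    simpl in Hx, Hr.
    destruct (H m x K (r / 2) ltac:(lra) Hx) as [y [Yy [By Cy]]].
    destruct (open_compl (Cs m) y (Hcl m) Yy Cy) as [K0 [r0 [Hr0 Hop]]].
    assert (Hi : 0 < / INR (S m)) by (apply Rinv_0_lt_compat, lt_0_INR; lia).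
    exists (y, max (max K0 K) m, Rmin (Rmin (r0 / 2) (r / 2)) (/ INR (S m))). intros _.
    unfold spec. repeat split; auto; try lia.
    - repeat apply Rmin_glb_lt; lra.
    - eapply Rle_trans. apply Rmin_l. apply Rmin_r.
    - apply Rmin_r.
    - intros z Yz Bz Cz. apply (Hop z Yz); auto. intros j Hj.
      apply Bmono with (2 * Rmin (Rmin (r0 / 2) (r / 2)) (/ INR (S m))); auto.
      pose proof (Rmin_l (Rmin (r0 / 2) (r / 2)) (/ INR (S m))). pose proof (Rmin_l (r0 / 2) (r / 2)). lra.
      apply Bz. lia. }
  destruct (choice_gen _ Hstep) as [F HF].
  set (s := fix s (m : nat) : V * nat * R := match m with O => (y0, 0%nat, 1) | S m' => F (m', s m') end).
  assert (Hval : forall m, valid (s m) /\ spec m (s m) (s (S m))).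
  { induction m.
    - assert (v0 : valid (s 0%nat)) by (split; simpl; auto; lra). split; auto. apply (HF (0%nat, s 0%nat)). auto.
    - destruct IHm as [v sp]. assert (v1 : valid (s (S m))).
      { destruct (s m) as [[x K] r]. destruct (s (S m)) as [[x' K'] r']. simpl in sp. split; simpl; tauto. }
      split; auto. apply (HF (S m, s (S m))). auto. }
  set (x := fun m => fst (fst (s m))). set (K := fun m => snd (fst (s m))). set (r := fun m => snd (s m)).
  assert (Inv : forall m, Y (x m) /\ 0 < r m /\ (K m <= K (S m))%nat /\ (m <= K (S m))%nat /\
     r (S m) <= r m / 2 /\ r (S m) <= / INR (S m) /\ Ball (x m) (K m) (r m / 2) (x (S m)) /\
     (forall z, Y z -> Ball (x (S m)) (K (S m)) (2 * r (S m)) z -> ~ Cs m z)).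
  { intros m. destruct (Hval m) as [[v1 v2] sp]. unfold x, K, r.
    destruct (s m) as [[x0 K0] r0]. destruct (s (S m)) as [[x1 K1] r1]. simpl in *. tauto. }
  assert (Kmono : forall d m, (K m <= K (m + d))%nat).
  { induction d; intros m. rewrite Nat.add_0_r; lia. replace (m + S d)%nat with (S (m + d)) by lia.
    specialize (IHd m). destruct (Inv (m + d)%nat) as [_ [_ [h _]]]. lia. }
  assert (Tel : forall d m j, (j <= K m)%nat -> B j (x m) (r m - r (m + d)%nat) (x (m + d)%nat)).
  { induction d; intros m j Hj.
    - rewrite Nat.add_0_r. replace (r m - r m) with 0 by ring. apply Brefl. apply Inv.
    - replace (m + S d)%nat with (S (m + d)) by lia.
      destruct (Inv (m + d)%nat) as [Y1 [R1 [_ [_ [Hr [_ [Hb _]]]]]]].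
      apply Bmono with ((r m - r (m + d)%nat) + r (m + d)%nat / 2); auto. apply Inv. apply Inv. lra.
      apply Btri with (x (m + d)%nat); auto. apply Inv. apply Inv.
      apply Hb. pose proof (Kmono d m). lia. }
  assert (Tel2 : forall m n j, (m <= n)%nat -> (j <= K m)%nat -> B j (x m) (r m) (x n)).
  { intros m n j Hmn Hj. replace n with (m + (n - m))%nat by lia.
    apply Bmono with (r m - r (m + (n - m))%nat). apply Inv. apply Inv.
    pose proof (proj1 (proj2 (Inv (m + (n - m))%nat))). lra. apply Tel; auto. }
  assert (Cau : forall j e, 0 < e -> exists N, forall a b, (N <= a)%nat -> (N <= b)%nat -> B j (x a) e (x b)).
  { intros j e He. destruct (inv_le_eventually (e / 2) ltac:(lra)) as [M HM].
    exists (S (max j M)). intros a b Ha Hb.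
    set (N := S (max j M)).
    assert (HjN : (j <= K N)%nat) by (destruct (Inv (max j M)) as [_ [_ [_ [h _]]]]; unfold N; lia).
    assert (HrN : r N <= e / 2).
    { destruct (Inv (max j M)) as [_ [_ [_ [_ [_ [h _]]]]]]. unfold N. eapply Rle_trans. apply h. apply HM. lia. }
    apply Bmono with (r N + r N). apply Inv. apply Inv. lra.
    apply Btri with (x N). apply Inv. apply Inv. apply Inv.
    apply Bsym. apply Inv. apply Inv. apply Tel2; auto. apply Tel2; auto. }
  destruct (Bcomplete x (fun m => proj1 (Inv m)) Cau) as [xs [Yxs Hconv]].
  destruct (Hcov xs Yxs) as [m Hm].
  destruct (Inv m) as [_ [_ [_ [_ [_ [_ [_ Hout]]]]]]].
  apply (Hout xs Yxs); auto.
  intros j Hj. assert (Hr1 : 0 < r (S m)) by apply Inv.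
  destruct (Hconv j (r (S m)) Hr1) as [N HN].
  set (n := max N (S m)).
  apply Bmono with (r (S m) + r (S m)). apply Inv. auto. lra.
  apply Btri with (x n). apply Inv. apply Inv. auto.
  apply Tel2; auto. unfold n; lia.
  apply Bsym. auto. apply Inv. apply HN. unfold n; lia.
Qed.
End Baire.


Definition psum (sn : nat -> cseq -> R) K a := rsum (fun j => sn j a) (S K).

Section UB.
Variables (X : cseq -> Prop) (sn : nat -> cseq -> R).
Hypothesis HFK : is_FK X sn.
Variable Y : cseq -> Prop.
Hypothesis YX : forall y, Y y -> X y.
Hypothesis Yzero : Y szero.
Hypothesis Yadd : forall a b, Y a -> Y b -> Y (sadd a b).
Hypothesis Yscal : forall c a, Y a -> Y (sscal c a).
Hypothesis Ycomplete : forall u : nat -> cseq, (forall n, Y (u n)) ->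
     (forall k eps, 0 < eps -> exists N : nat, forall m n, (N <= m)%nat -> (N <= n)%nat ->
         sn k (ssub (u m) (u n)) < eps) ->
     exists x, Y x /\ seq_conv sn u x.

Lemma Ysub a b : Y a -> Y b -> Y (ssub a b).
Proof. intros. rewrite ssub_alt. apply Yadd; auto. Qed.

Definition BX (j : nat) (a : cseq) (r : R) (b : cseq) : Prop := sn j (ssub b a) <= r.

Lemma psum_nonneg K a : X a -> 0 <= psum sn K a.
Proof. intros. apply rsum_nonneg. intros; apply sn_nonneg with X; auto. Qed.

Lemma psum_ge K a j : X a -> (j <= K)%nat -> sn j a <= psum sn K a.
Proof. intros. apply (rsum_ge_term (fun j => sn j a)). intros; apply sn_nonneg with X; auto. lia. Qed.

Theorem unif_bound (I : Type) (rho : I -> cseq -> R) :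
  (forall i a t, Y a -> 0 < t -> rho i (sscal (RtoC t) a) = t * rho i a) ->
  (forall i a b, Y a -> Y b -> rho i (ssub a b) <= rho i a + rho i b) ->
  (forall i a b, Y a -> Y b -> rho i a <= rho i b + rho i (ssub a b)) ->
  (forall i w, (forall l, Y (w l)) -> seq_conv sn w szero -> Un_cv (fun l => rho i (w l)) 0) ->
  (forall a, Y a -> exists M, forall i, rho i a <= M) ->
  exists K Cst, 0 <= Cst /\ forall a i, Y a -> rho i a <= Cst * psum sn K a.
Proof.
  intros Rh Rsub Rrev Rcont Rbd.
  set (Cs := fun (m : nat) a => forall i, rho i a <= INR m).
  assert (XX : forall a, Y a -> X a) by auto.
  destruct (baire cseq Y BX) with (Cs := Cs) as [m [x0 [K [r [Hr [Yx0 Hball]]]]]].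
  - intros j a b r Ya Yb H. unfold BX in *. rewrite sn_sub_sym with (X := X); auto.
  - intros j a b c r s Ya Yb Yc H1 H2. unfold BX in *.
    pose proof (sn_sub_tri X sn HFK j c b a); auto. specialize (H (XX c Yc) (XX b Yb) (XX a Ya)). lra.
  - intros j a Ya. unfold BX. replace (ssub a a) with szero by (apply cseq_ext; intros; unfold ssub, szero; ring).
    rewrite sn_zero with (X := X); auto. lra.
  - intros j a b r s _ _ H1 H2. unfold BX in *. lra.
  - intros u Yu Hc. destruct (Ycomplete u Yu) as [x [Yx Hx]].
    + intros k eps He. destruct (Hc k (eps / 2) ltac:(lra)) as [N HN]. exists N. intros m n Hm Hn.
      specialize (HN n m Hn Hm). unfold BX in HN. lra.
    + exists x. split; auto. intros j r Hr. destruct (Hx j r Hr) as [N HN]. exists N. intros n Hn.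
      specialize (HN n Hn). unfold R_dist in HN. rewrite Rminus_0_r in HN. unfold BX.
      pose proof (Rle_abs (sn j (ssub (u n) x))). lra.
  - exists szero; auto.
  - intros m u x Yu Cu Yx Hconv i.
    assert (Hw : Un_cv (fun l => rho i (ssub x (u l))) 0).
    { apply Rcont. intros; apply Ysub; auto. intros k eps He.
      destruct (Hconv k (eps / 2) ltac:(lra)) as [N HN]. exists N. intros n Hn. specialize (HN n Hn).
      unfold BX in HN. unfold R_dist. rewrite Rminus_0_r, sn_sub0.
      rewrite sn_sub_sym with (X := X); auto. rewrite Rabs_right. lra.
      apply Rle_ge, sn_nonneg with X; auto. apply X_sub with sn; auto. }
    apply Rnot_lt_le. intros Hlt.
    destruct (Hw (rho i x - INR m) ltac:(lra)) as [N HN]. specialize (HN N (le_n _)).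
    unfold R_dist in HN. rewrite Rminus_0_r in HN. pose proof (Rle_abs (rho i (ssub x (u N)))).
    pose proof (Rrev i x (u N) Yx (Yu N)). pose proof (Cu N i). lra.
  - intros a Ya. destruct (Rbd a Ya) as [M HM]. destruct (INR_unbounded M) as [m Hm].
    exists m. intros i. specialize (HM i). lra.
  - assert (Key : forall a t, Y a -> 0 < t -> (forall j, (j <= K)%nat -> t * sn j a <= r) ->
             forall i, t * rho i a <= 2 * INR m).
    { intros a t Ya Ht Hj i.
      set (y := sadd x0 (sscal (RtoC t) a)).
      assert (Yy : Y y) by (apply Yadd; auto).
      assert (Ey : ssub y x0 = sscal (RtoC t) a) by (apply cseq_ext; intros; unfold y, ssub, sadd, sscal; ring).
      assert (Cy : Cs m y).
      { apply Hball; auto. intros j Hjk. unfold BX. rewrite Ey. rewrite sn_rscal with (X := X); auto. lra. }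
      assert (Cx0 : Cs m x0).
      { apply Hball; auto. intros j Hjk. unfold BX. replace (ssub x0 x0) with szero by (apply cseq_ext; intros; unfold ssub, szero; ring).
        rewrite sn_zero with (X := X); auto. lra. }
      rewrite <- Rh; auto. rewrite <- Ey. pose proof (Rsub i y x0 Yy Yx0). pose proof (Cy i). pose proof (Cx0 i). lra. }
    exists K, (2 * INR m / r). split.
    { apply Rmult_le_pos. pose proof (pos_INR m). lra. apply Rlt_le, Rinv_0_lt_compat; auto. }
    intros a i Ya. set (s := psum sn K a).
    assert (Hs : 0 <= s) by (apply psum_nonneg; auto).
    destruct (Rle_lt_or_eq_dec 0 s Hs) as [Hsp|Hs0].
    + assert (Ht : 0 < r / s) by (apply Rdiv_lt_0_compat; auto).
      pose proof (Key a (r / s) Ya Ht) as K1.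
      assert (K2 : r / s * rho i a <= 2 * INR m).
      { apply K1. intros j Hj. pose proof (psum_ge K a j (YX a Ya) Hj). fold s in H.
        apply Rle_trans with (r / s * s). apply Rmult_le_compat_l; lra. right; field; lra. }
      apply Rmult_le_reg_l with (r / s); auto.
      replace (r / s * (2 * INR m / r * s)) with (2 * INR m) by (field; lra). auto.
    + rewrite <- Hs0. rewrite Rmult_0_r. apply Rnot_lt_le. intros Hpos.
      assert (Ht : 0 < (2 * INR m + 1) / rho i a) by (apply Rdiv_lt_0_compat; auto; pose proof (pos_INR m); lra).
      pose proof (Key a _ Ya Ht) as K1.
      assert (K2 : (2 * INR m + 1) / rho i a * rho i a <= 2 * INR m).
      { apply K1. intros j Hj. pose proof (psum_ge K a j (YX a Ya) Hj). fold s in H.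
        pose proof (sn_nonneg X sn HFK j a (YX a Ya)). replace (sn j a) with 0 by lra. lra. }
      replace ((2 * INR m + 1) / rho i a * rho i a) with (2 * INR m + 1) in K2 by (field; lra). lra.
Qed.
End UB.


Lemma zorn_prop (T : Type) (t0 : T) (R : T -> T -> Prop) :
  (forall t, R t t) -> (forall r s t, R r s -> R s t -> R r t) ->
  (forall A : T -> Prop, (forall s t, A s -> A t -> R s t \/ R t s) -> exists t, forall s, A s -> R s t) ->
  exists t, forall s, R t s -> R s t.
Proof.
  intros Hr Ht Hc.
  assert (E : forall a b, is_true (boolp.asbool (R a b)) <-> R a b).
  { intros a b. destruct (boolp.asboolP (R a b)); split; auto; discriminate. }
  destruct (@classical_sets.ZL_preorder T t0 (fun a b => boolp.asbool (R a b))) as [t Htm].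
  - intros t. apply E. auto.
  - intros r s t H1 H2. apply E. apply E in H1. apply E in H2. eauto.
  - intros A HA. destruct (Hc A) as [t Hts].
    + intros s t As At. destruct (HA s t As At) as [h|h]; [left|right]; apply E; auto.
    + exists t. intros s As. apply E. auto.
  - exists t. intros s Hs. apply E. apply Htm. apply E. auto.
Qed.

Ltac cext := apply cseq_ext; intros; unfold sadd, sscal, ssub, szero;
  repeat rewrite ?RtoC_mult, ?RtoC_plus, ?RtoC_opp, ?RtoC_minus.

Section RHB.
Variable X : cseq -> Prop.
Hypothesis Xzero : X szero.
Hypothesis Xadd : forall a b, X a -> X b -> X (sadd a b).
Hypothesis Xscal : forall c a, X a -> X (sscal c a).
Variable p : cseq -> R.
Hypothesis p_tri : forall a b, X a -> X b -> p (sadd a b) <= p a + p b.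
Hypothesis p_hom : forall c a, X a -> p (sscal c a) = Cmod c * p a.

Definition pe := ((cseq -> Prop) * (cseq -> R))%type.
Definition pvalid (e : pe) : Prop :=
  let D := fst e in let h := snd e in
  (forall u, D u -> X u) /\ D szero /\ (forall a b, D a -> D b -> D (sadd a b)) /\
  (forall t a, D a -> D (sscal (RtoC t) a)) /\
  (forall a b, D a -> D b -> h (sadd a b) = h a + h b) /\
  (forall t a, D a -> h (sscal (RtoC t) a) = t * h a) /\
  (forall a, D a -> h a <= p a).
Definition pext (e e' : pe) : Prop :=
  (forall u, fst e u -> fst e' u) /\ (forall u, fst e u -> snd e' u = snd e u).

Lemma rscal_sub_closed (D : cseq -> Prop) : (forall a b, D a -> D b -> D (sadd a b)) ->
  (forall t a, D a -> D (sscal (RtoC t) a)) -> forall a b, D a -> D b -> D (ssub a b).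
Proof.
  intros Ha Hs a b Da Db. replace (ssub a b) with (sadd a (sscal (RtoC (- 1)) b)). auto.
  cext. ring.
Qed.

Lemma rep_unique (D : cseq -> Prop) v d d' a a' :
  (forall a b, D a -> D b -> D (sadd a b)) -> (forall t a, D a -> D (sscal (RtoC t) a)) ->
  ~ D v -> D d -> D d' -> sadd d (sscal (RtoC a) v) = sadd d' (sscal (RtoC a') v) -> d = d' /\ a = a'.
Proof.
  intros Dadd Dscal Dv Dd Dd' E.
  assert (Ej : forall j, Cplus (d j) (Cmult (RtoC a) (v j)) = Cplus (d' j) (Cmult (RtoC a') (v j))).
  { intros j. apply (f_equal (fun x => x j)) in E. exact E. }
  destruct (Req_dec a a') as [<-|ne].
  - split; auto. apply cseq_ext. intros j. specialize (Ej j).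
    replace (d j) with (Cminus (Cplus (d j) (Cmult (RtoC a) (v j))) (Cmult (RtoC a) (v j))) by ring.
    rewrite Ej. ring.
  - exfalso. apply Dv.
    replace v with (sscal (RtoC (/ (a - a'))) (ssub d' d)).
    apply Dscal. apply rscal_sub_closed; auto.
    apply cseq_ext. intros j. specialize (Ej j). unfold sscal, ssub.
    assert (RtoC (a - a') <> RtoC 0) by (apply RtoC_neq0; lra).
    rewrite RtoC_inv.
    replace (Cminus (d' j) (d j)) with (Cmult (Cminus (RtoC a) (RtoC a')) (v j)).
    rewrite <- RtoC_minus. field. auto.
    replace (d' j) with (Cminus (Cplus (d' j) (Cmult (RtoC a') (v j))) (Cmult (RtoC a') (v j))) by ring.
    rewrite <- Ej. ring. lra.
Qed.

Lemma one_step (D : cseq -> Prop) (h : cseq -> R) v : pvalid (D, h) -> X v -> ~ D v ->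
  exists e', pvalid e' /\ pext (D, h) e' /\ fst e' v.
Proof.
  intros [DX [D0 [Dadd [Dscal [hadd [hscal hp]]]]]] Xv Dv. cbn [fst snd] in *.
  assert (Dsub := rscal_sub_closed D Dadd Dscal).
  assert (Xsub : forall a b, X a -> X b -> X (ssub a b)).
  { intros a b Xa Xb. replace (ssub a b) with (sadd a (sscal (RtoC (- 1)) b)). auto. cext. ring. }
  set (S := fun r => exists d, D d /\ r = h d - p (ssub d v)).
  assert (key : forall d1 d2, D d1 -> D d2 -> h d1 - p (ssub d1 v) <= p (sadd d2 v) - h d2).
  { intros d1 d2 D1 D2.
    assert (h (sadd d1 d2) <= p (sadd (ssub d1 v) (sadd d2 v))).
    { replace (sadd (ssub d1 v) (sadd d2 v)) with (sadd d1 d2) by (cext; ring). auto. }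
    pose proof (p_tri (ssub d1 v) (sadd d2 v) ltac:(auto) ltac:(auto)).
    rewrite hadd in H; auto. lra. }
  destruct (completeness S) as [c [Hub Hlub]].
  { exists (p (sadd szero v) - h szero). intros r [d [Dd ->]]. apply key; auto. }
  { exists (h szero - p (ssub szero v)). exists szero. auto. }
  assert (c_ge : forall d, D d -> h d - p (ssub d v) <= c).
  { intros d Dd. apply Hub. exists d. auto. }
  assert (c_le : forall d, D d -> c <= p (sadd d v) - h d).
  { intros d Dd. apply Hlub. intros r [d1 [D1 ->]]. apply key; auto. }
  set (D' := fun u => exists d a, D d /\ u = sadd d (sscal (RtoC a) v)).
  set (h' := fun u => match excluded_middle_informative
        (exists da : cseq * R, D (fst da) /\ u = sadd (fst da) (sscal (RtoC (snd da)) v)) with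
        | left H => let da := proj1_sig (constructive_indefinite_description _ H) in h (fst da) + snd da * c
        | right _ => 0 end).
  assert (hspec : forall d a, D d -> h' (sadd d (sscal (RtoC a) v)) = h d + a * c).
  { intros d a Dd. unfold h'. destruct (excluded_middle_informative _) as [H|H].
    - destruct (constructive_indefinite_description _ H) as [[d1 a1] [D1 E1]]. simpl in *.
      destruct (rep_unique D v d d1 a a1 Dadd Dscal Dv Dd D1 E1) as [-> ->]. auto.
    - exfalso. apply H. exists (d, a). auto. }
  exists (D', h'). split; [|split].
  - unfold pvalid. split; [|split; [|split; [|split; [|split; [|split]]]]].
    + intros u [d [a [Dd ->]]]. auto.
    + exists szero, 0. split; auto. cext. ring.
    + intros u w [d1 [a1 [D1 ->]]] [d2 [a2 [D2 ->]]]. exists (sadd d1 d2), (a1 + a2). split; auto. cext. ring.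
    + intros t u [d [a [Dd ->]]]. exists (sscal (RtoC t) d), (t * a). split; auto. cext. ring.
    + intros u w [d1 [a1 [D1 ->]]] [d2 [a2 [D2 ->]]].
      replace (sadd (sadd d1 (sscal (RtoC a1) v)) (sadd d2 (sscal (RtoC a2) v)))
        with (sadd (sadd d1 d2) (sscal (RtoC (a1 + a2)) v)) by (cext; ring).
      rewrite !hspec; auto. rewrite hadd; auto. ring.
    + intros t u [d [a [Dd ->]]].
      replace (sscal (RtoC t) (sadd d (sscal (RtoC a) v))) with (sadd (sscal (RtoC t) d) (sscal (RtoC (t * a)) v)) by (cext; ring).
      rewrite !hspec; auto. rewrite hscal; auto. ring.
    + intros u [d [a [Dd ->]]]. rewrite hspec; auto.
      destruct (Rtotal_order a 0) as [Hn|[H0|Hpos]].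
      * set (b := - a). assert (Hb : 0 < b) by (unfold b; lra).
        assert (E : sadd d (sscal (RtoC a) v) = sscal (RtoC b) (ssub (sscal (RtoC (/ b)) d) v)).
        { cext. rewrite RtoC_inv. unfold b. rewrite RtoC_opp. field. all: first [unfold b in *; lra | let E := fresh in intro E; apply (f_equal Re) in E; simpl in E; unfold b in *; lra]. }
        rewrite E, p_hom. rewrite Cmod_RtoC_pos by lra.
        pose proof (c_ge _ (Dscal (/ b) d Dd)) as Hc1. rewrite hscal in Hc1; auto.
        assert (Hc2 : b * (/ b * h d - p (ssub (sscal (RtoC (/ b)) d) v)) <= b * c) by (apply Rmult_le_compat_l; lra).
        replace (b * (/ b * h d - p (ssub (sscal (RtoC (/ b)) d) v))) with (h d - b * p (ssub (sscal (RtoC (/ b)) d) v)) in Hc2 by (field; lra).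
        unfold b in *. lra.
        apply Xsub; auto.
      * subst a. replace (sadd d (sscal (RtoC 0) v)) with d by (cext; ring). rewrite Rmult_0_l, Rplus_0_r. auto.
      * assert (E : sadd d (sscal (RtoC a) v) = sscal (RtoC a) (sadd (sscal (RtoC (/ a)) d) v)).
        { cext. rewrite RtoC_inv. field. all: first [lra | let E := fresh in intro E; apply (f_equal Re) in E; simpl in E; lra]. }
        rewrite E, p_hom. rewrite Cmod_RtoC_pos by lra.
        pose proof (c_le _ (Dscal (/ a) d Dd)) as Hc1. rewrite hscal in Hc1; auto.
        assert (Hc2 : a * c <= a * (p (sadd (sscal (RtoC (/ a)) d) v) - / a * h d)) by (apply Rmult_le_compat_l; lra).
        replace (a * (p (sadd (sscal (RtoC (/ a)) d) v) - / a * h d)) with (a * p (sadd (sscal (RtoC (/ a)) d) v) - h d) in Hc2 by (field; lra).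
        lra. auto.
  - split; simpl.
    + intros u Du. exists u, 0. split; auto. cext. ring.
    + intros u Du. replace u with (sadd u (sscal (RtoC 0) v)) at 1 by (cext; ring). rewrite hspec; auto. ring.
  - simpl. exists szero, 1. split; auto. cext. ring.
Qed.

Lemma pext_refl e : pext e e.
Proof. split; auto. Qed.

Lemma pext_trans e1 e2 e3 : pext e1 e2 -> pext e2 e3 -> pext e1 e3.
Proof.
  intros [A1 B1] [A2 B2]. split; auto. intros u Hu. rewrite B2 by auto. auto.
Qed.

Theorem real_HB (D0 : cseq -> Prop) (h0 : cseq -> R) : pvalid (D0, h0) ->
  exists h, (forall a b, X a -> X b -> h (sadd a b) = h a + h b) /\
            (forall t a, X a -> h (sscal (RtoC t) a) = t * h a) /\
            (forall a, X a -> h a <= p a) /\ (forall u, D0 u -> h u = h0 u).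
Proof.
  intros V0.
  set (T := {e : pe | pvalid e /\ pext (D0, h0) e}).
  set (t0 := exist (fun e => pvalid e /\ pext (D0, h0) e) (D0, h0) (conj V0 (pext_refl _)) : T).
  destruct (zorn_prop T t0 (fun s t => pext (proj1_sig s) (proj1_sig t))) as [tm Htm].
  - intros; apply pext_refl.
  - intros r s t; apply pext_trans.
  - intros A HA. destruct (classic (exists t, A t)) as [[t1 At1]|Hne].
    2:{ exists t0. intros s As. exfalso; eauto. }
    set (Ds := fun u => exists t, A t /\ fst (proj1_sig t) u).
    set (hs := fun u => match excluded_middle_informative (exists t, A t /\ fst (proj1_sig t) u) with
                        | left H => snd (proj1_sig (proj1_sig (constructive_indefinite_description _ H))) u
                        | right _ => 0 end).
    assert (hspec : forall t u, A t -> fst (proj1_sig t) u -> hs u = snd (proj1_sig t) u).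
    { intros t u At Hu. unfold hs. destruct (excluded_middle_informative _) as [H|H].
      - destruct (constructive_indefinite_description _ H) as [t' [At' Hu']]. simpl.
        destruct (HA t t' At At') as [[E1 E2]|[E1 E2]].
        + rewrite E2; auto.
        + rewrite E2; auto.
      - exfalso. apply H. eauto. }
    assert (two : forall t1 t2 u w, A t1 -> A t2 -> fst (proj1_sig t1) u -> fst (proj1_sig t2) w ->
              exists t, A t /\ fst (proj1_sig t) u /\ fst (proj1_sig t) w).
    { intros s1 s2 u w A1 A2 H1 H2. destruct (HA s1 s2 A1 A2) as [[E1 _]|[E1 _]].
      - exists s2. auto.
      - exists s1. auto. }
    assert (Vs : pvalid (Ds, hs) /\ pext (D0, h0) (Ds, hs)).
    { assert (VV : forall t : T, pvalid (proj1_sig t)) by (intros t; apply (proj1 (proj2_sig t))).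
      split; [split; [|split; [|split; [|split; [|split; [|split]]]]]|split]; cbn [fst snd].
      - intros u [t [At Hu]]. destruct (VV t) as [vX _]. auto.
      - exists t1. split; auto. destruct (VV t1) as [_ [v0 _]]. auto.
      - intros a b [s1 [A1 H1]] [s2 [A2 H2]]. destruct (two s1 s2 a b A1 A2 H1 H2) as [t [At [Ha Hb]]].
        exists t. split; auto. destruct (VV t) as [_ [_ [vadd _]]]. auto.
      - intros r a [t [At Ha]]. exists t. split; auto. destruct (VV t) as [_ [_ [_ [vscal _]]]]. auto.
      - intros a b [s1 [A1 H1]] [s2 [A2 H2]]. destruct (two s1 s2 a b A1 A2 H1 H2) as [t [At [Ha Hb]]].
        destruct (VV t) as [_ [_ [vadd [_ [vhadd _]]]]].
        rewrite !(hspec t); auto.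
      - intros r a [t [At Ha]]. destruct (VV t) as [_ [_ [_ [vscal [_ [vhscal _]]]]]].
        rewrite !(hspec t); auto.
      - intros a [t [At Ha]]. destruct (VV t) as [_ [_ [_ [_ [_ [_ vhp]]]]]]. rewrite (hspec t); auto.
      - intros u Hu. exists t1. split; auto. destruct (proj2 (proj2_sig t1)) as [E1 E2]. auto.
      - intros u Hu. destruct (proj2 (proj2_sig t1)) as [E1 E2]. rewrite (hspec t1); auto. }
    exists (exist _ (Ds, hs) Vs). intros s As. simpl. split; simpl.
    + intros u Hu. exists s. auto.
    + intros u Hu. apply hspec; auto.
  - destruct tm as [[D h] [Vm Em]]. simpl in Htm.
    assert (full : forall v, X v -> D v).
    { intros v Xv. apply NNPP. intros Dv. destruct (one_step D h v Vm Xv Dv) as [e' [Ve' [Ee' Fe']]].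
      assert (E0 : pext (D0, h0) e') by (eapply pext_trans; eauto).
      specialize (Htm (exist _ e' (conj Ve' E0))). simpl in Htm. destruct (Htm Ee') as [E1 _]. apply Dv. apply E1. exact Fe'. }
    destruct Vm as [DX [_ [_ [_ [hadd [hscal hp]]]]]]. simpl in *.
    exists h. split; [|split; [|split]]; auto.
    destruct Em as [E1 E2]. simpl in *. auto.
Qed.
End RHB.


Ltac cpair := unfold Cmult, Cplus, Copp, Cminus, RtoC, Ci, Re, Im, fst, snd in *; simpl; first [ring | f_equal; ring].

Theorem complex_HB (X : cseq -> Prop) (p : cseq -> R) (Y : cseq -> Prop) (g : cseq -> C) :
  X szero -> (forall a b, X a -> X b -> X (sadd a b)) -> (forall c a, X a -> X (sscal c a)) ->
  (forall a b, X a -> X b -> p (sadd a b) <= p a + p b) ->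
  (forall c a, X a -> p (sscal c a) = Cmod c * p a) ->
  (forall a, X a -> 0 <= p a) ->
  (forall u, Y u -> X u) -> Y szero -> (forall a b, Y a -> Y b -> Y (sadd a b)) ->
  (forall c a, Y a -> Y (sscal c a)) ->
  (forall a b, Y a -> Y b -> g (sadd a b) = Cplus (g a) (g b)) ->
  (forall c a, Y a -> g (sscal c a) = Cmult c (g a)) ->
  (forall u, Y u -> Cmod (g u) <= p u) ->
  exists f, linX X f /\ (forall u, Y u -> f u = g u) /\ (forall u, X u -> Cmod (f u) <= p u).
Proof.
  intros Xz Xadd Xscal ptri phom pnn YX Yz Yadd Yscal gadd gscal gp.
  destruct (real_HB X Xadd Xscal p ptri phom Y (fun u => Re (g u))) as [h [hadd [hscal [hp hext]]]].
  { split; [|split; [|split; [|split; [|split; [|split]]]]]; cbn [fst snd]; auto.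
    - intros a b Ya Yb. rewrite gadd; auto.
    - intros t a Ya. rewrite gscal; auto. destruct (g a). cpair.
    - intros a Ya. eapply Rle_trans. apply Rle_abs. eapply Rle_trans. apply re_le_Cmod. auto. }
  set (f := fun u => (h u, - h (sscal Ci u)) : C).
  assert (XCi : forall u, X u -> X (sscal Ci u)) by auto.
  exists f. split; [split|split].
  - intros a b Xa Xb. unfold f.
    replace (sscal Ci (sadd a b)) with (sadd (sscal Ci a) (sscal Ci b)) by (cext; ring).
    rewrite !hadd; auto. cpair.
  - intros c a Xa. destruct c as [ca cb].
    assert (E1 : sscal (ca, cb) a = sadd (sscal (RtoC ca) a) (sscal (RtoC cb) (sscal Ci a))).
    { apply cseq_ext; intros j. unfold sadd, sscal. destruct (a j). cpair. }
    assert (E2 : sscal Ci (sscal (ca, cb) a) = sadd (sscal (RtoC ca) (sscal Ci a)) (sscal (RtoC (- cb)) a)).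
    { apply cseq_ext; intros j. unfold sadd, sscal. destruct (a j). cpair. }
    unfold f. rewrite E2, E1. rewrite !hadd, !hscal; auto. cpair.
  - intros u Yu. unfold f. rewrite !hext; auto. rewrite gscal; auto. destruct (g u). cpair.
  - intros u Xu. destruct (Req_dec (Cmod (f u)) 0) as [E|E].
    + rewrite E. auto.
    + assert (Hm : 0 < Cmod (f u)) by (pose proof (Cmod_ge_0 (f u)); lra).
      assert (Hn : RtoC (Cmod (f u)) <> RtoC 0) by (apply RtoC_neq0; lra).
      set (w := Cdiv (Cconj (f u)) (RtoC (Cmod (f u)))).
      assert (Hw : Cmod w = 1).
      { unfold w. rewrite Cmod_div by auto. rewrite Cmod_conj, Cmod_R, Rabs_right by lra. field. lra. }
      assert (Hwf : Cmult w (f u) = RtoC (Cmod (f u))).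
      { unfold w, Cdiv. replace (Cmult (Cmult (Cconj (f u)) (Cinv (RtoC (Cmod (f u))))) (f u))
          with (Cmult (Cmult (f u) (Cconj (f u))) (Cinv (RtoC (Cmod (f u))))) by ring.
        rewrite <- Cmod2_conj. rewrite RtoC_pow. field. auto. }
      assert (Hlin : f (sscal w u) = Cmult w (f u)).
      { destruct w as [ca cb].
        assert (E1 : sscal (ca, cb) u = sadd (sscal (RtoC ca) u) (sscal (RtoC cb) (sscal Ci u))).
        { apply cseq_ext; intros j. unfold sadd, sscal. destruct (u j). cpair. }
        assert (E2 : sscal Ci (sscal (ca, cb) u) = sadd (sscal (RtoC ca) (sscal Ci u)) (sscal (RtoC (- cb)) u)).
        { apply cseq_ext; intros j. unfold sadd, sscal. destruct (u j). cpair. }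
        unfold f. rewrite E2, E1. rewrite !hadd, !hscal; auto. cpair. }
      rewrite Hwf in Hlin.
      assert (Re (f (sscal w u)) <= p u).
      { unfold f at 1. simpl. rewrite <- (Rmult_1_l (p u)). rewrite <- Hw. rewrite <- phom; auto. }
      rewrite Hlin in H. simpl in H. exact H.
Qed.


Section Mackey.
Variables (X : cseq -> Prop) (sn : nat -> cseq -> R).
Hypothesis HFK : is_FK X sn.

Lemma HB_point k v : X v ->
  exists G, linX X G /\ (forall u, X u -> Cmod (G u) <= sn k u) /\ G v = RtoC (sn k v).
Proof.
  intros Xv.
  set (Yv := fun w => exists t, w = sscal t v).
  set (g := fun w => match excluded_middle_informative (exists t, w = sscal t v) with
            | left H => Cmult (proj1_sig (constructive_indefinite_description _ H)) (RtoC (sn k v))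
            | right _ => RtoC 0 end).
  assert (gspec : forall t, g (sscal t v) = Cmult t (RtoC (sn k v))).
  { intros t. unfold g. destruct (excluded_middle_informative _) as [H|H].
    - destruct (constructive_indefinite_description _ H) as [t' Et']. simpl.
      destruct (Req_dec (sn k v) 0) as [E0|E0].
      + rewrite E0. ring.
      + assert (Hj : exists j, v j <> RtoC 0).
        { apply NNPP. intros Hn. apply E0. replace v with szero. apply sn_zero with X; auto.
          apply cseq_ext. intros j. apply NNPP. intros Hne. apply Hn. exists j. unfold szero in Hne. auto. }
        destruct Hj as [j Hj]. apply (f_equal (fun x => x j)) in Et'. unfold sscal in Et'.
        assert (t = t').
        { replace t with (Cdiv (Cmult t (v j)) (v j)) by (field; auto). rewrite Et'. field; auto. }
        subst. auto.
    - exfalso. apply H. exists t. auto. }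
  destruct (complex_HB X (sn k) Yv g) as [G [Glin [Gext Gb]]].
  - exact (X_zero X sn HFK).
  - exact (X_add X sn HFK).
  - exact (X_scal X sn HFK).
  - exact (sn_tri X sn HFK k).
  - exact (sn_hom X sn HFK k).
  - exact (sn_nonneg X sn HFK k).
  - intros u [t ->]. apply X_scal with sn; auto.
  - exists (RtoC 0). cext. ring.
  - intros a b [t1 ->] [t2 ->]. exists (Cplus t1 t2). cext. ring.
  - intros c a [t ->]. exists (Cmult c t). cext. ring.
  - intros a b [t1 ->] [t2 ->]. replace (sadd (sscal t1 v) (sscal t2 v)) with (sscal (Cplus t1 t2) v) by (cext; ring).
    rewrite !gspec. ring.
  - intros c a [t ->]. replace (sscal c (sscal t v)) with (sscal (Cmult c t) v) by (cext; ring).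
    rewrite !gspec. ring.
  - intros u [t ->]. rewrite gspec. rewrite sn_hom with (X := X); auto. rewrite Cmod_mult.
    rewrite Cmod_R. rewrite Rabs_right. lra. apply Rle_ge, sn_nonneg with X; auto.
  - exists G. split; auto. split; auto.
    replace v with (sscal (RtoC 1) v) at 1 by (cext; ring). rewrite Gext. rewrite gspec. ring.
    exists (RtoC 1). auto.
Qed.

Definition YE k (f : cseq -> C) : Prop :=
  linX X f /\ exists c, 0 <= c /\ forall u, X u -> Cmod (f u) <= c * sn k u.
Definition BE k (j : nat) (f : cseq -> C) (r : R) (g : cseq -> C) : Prop :=
  forall u, X u -> Cmod (Cminus (g u) (f u)) <= r * sn k u.

Lemma YE_dual k f : YE k f -> in_dual X sn f.
Proof.
  intros [[fadd fscal] [c [c0 fb]]]. split; auto. split; auto.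
  intros u x Xu Xx Hc eps He.
  destruct (Hc k (eps / (c + 1))) as [N HN]. apply Rdiv_lt_0_compat; lra.
  exists N. intros n Hn. specialize (HN n Hn). unfold R_dist in HN. rewrite Rminus_0_r in HN.
  rewrite <- (lin_sub X sn HFK f (u n) x) by (auto; split; auto).
  eapply Rle_lt_trans. apply fb. apply X_sub with sn; auto.
  pose proof (sn_nonneg X sn HFK k (ssub (u n) x) ltac:(apply X_sub with sn; auto)).
  rewrite Rabs_right in HN by lra.
  apply Rle_lt_trans with ((c + 1) * sn k (ssub (u n) x)). nra.
  apply Rmult_lt_compat_l with (r := c + 1) in HN; [|lra].
  replace ((c + 1) * (eps / (c + 1))) with eps in HN by (field; lra). auto.
Qed.

Theorem mackey (v : nat -> cseq) : (forall n, X (v n)) ->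
  (forall f, in_dual X sn f -> exists M, forall n, Cmod (f (v n)) <= M) ->
  forall k, exists M, forall n, sn k (v n) <= M.
Proof.
  intros Xv Hw k.
  assert (snn : forall u, X u -> 0 <= sn k u) by (intros; apply sn_nonneg with X; auto).
  set (Cs := fun (m : nat) (f : cseq -> C) => forall n, Cmod (f (v n)) <= INR m).
  destruct (baire (cseq -> C) (YE k) (BE k)) with (Cs := Cs) as [m [f0 [K [r [Hr [Yf0 Hball]]]]]].
  - intros j a b r _ _ H u Xu. rewrite Cmod_sub_sym. auto.
  - intros j a b c r s _ _ _ H1 H2 u Xu. eapply Rle_trans. apply (Cmod_tri_sub _ (b u)).
    specialize (H1 u Xu). specialize (H2 u Xu). lra.
  - intros j a _ u Xu. replace (Cminus (a u) (a u)) with (RtoC 0) by ring. rewrite Cmod_0. lra.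
  - intros j a b r s _ _ Hrs H u Xu. specialize (H u Xu). specialize (snn u Xu). nra.
  - intros u Yu Hc.
    assert (Hpt : forall x, exists l, X x -> Ccv (fun n => u n x) l).
    { intros x. destruct (classic (X x)) as [Xx|Xx]. 2:{ exists (RtoC 0). intros; contradiction. }
      destruct (Ccauchy_cv (fun n => u n x)) as [l Hl].
      - intros eps He. destruct (Hc 0%nat (eps / (sn k x + 1))) as [N HN].
        apply Rdiv_lt_0_compat; auto. specialize (snn x Xx). lra.
        exists N. intros m n Hm Hn. specialize (HN n m Hn Hm x Xx). specialize (snn x Xx).
        eapply Rle_lt_trans. apply HN.
        apply Rlt_le_trans with (eps / (sn k x + 1) * (sn k x + 1)).
        apply Rmult_lt_compat_l. apply Rdiv_lt_0_compat; lra. lra. right. field. lra.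
      - exists l. auto. }
    destruct (choice_gen _ Hpt) as [F HF].
    exists F. split.
    + split; [split|].
      * intros a b Xa Xb. apply (Ccv_unique (fun n => u n (sadd a b))). apply HF. apply X_add with sn; auto.
        apply Ccv_ext with (fun n => Cplus (u n a) (u n b)). intros n. symmetry. apply (Yu n); auto.
        apply Ccv_plus; apply HF; auto.
      * intros c a Xa. apply (Ccv_unique (fun n => u n (sscal c a))). apply HF. apply X_scal with sn; auto.
        apply Ccv_ext with (fun n => Cmult c (u n a)). intros n. symmetry. apply (Yu n); auto.
        apply Ccv_scal; apply HF; auto.
      * destruct (Yu 0%nat) as [_ [c0 [Hc0 Hb0]]].
        destruct (Hc 0%nat 1 Rlt_0_1) as [N1 HN1].
        destruct (Yu N1) as [_ [c1 [Hc1 Hb1]]].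
        exists (c1 + 1). split. lra. intros x Xx.
        assert (Cmod (Cminus (F x) (u N1 x)) <= 1 * sn k x).
        { apply (Ccv_le (fun m => u m x) (F x) (u N1 x) _ N1). auto. intros m Hm. apply HN1; auto. }
        pose proof (Cmod_rev_tri (F x) (u N1 x)). pose proof (Hb1 x Xx). lra.
    + intros j r0 Hr0. destruct (Hc j r0 Hr0) as [N HN]. exists N. intros n Hn x Xx.
      rewrite Cmod_sub_sym. apply (Ccv_le (fun m => u m x) (F x) (u n x) (r0 * sn k x) N). auto.
      intros m Hm. apply (HN n m); auto.
  - exists (fun _ => RtoC 0). split. split; intros; ring. exists 0. split. lra. intros u Xu.
    rewrite Cmod_0. specialize (snn u Xu). lra.
  - intros m u f Yu Cu Yf Hconv n. apply Rnot_lt_le. intros Hlt.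
    assert (Hs : 0 < (Cmod (f (v n)) - INR m) / (sn k (v n) + 1)).
    { apply Rdiv_lt_0_compat. lra. specialize (snn (v n) (Xv n)). lra. }
    destruct (Hconv 0%nat _ Hs) as [N HN]. specialize (HN N (le_n _) (v n) (Xv n)).
    pose proof (Cu N n). pose proof (Cmod_rev_tri (f (v n)) (u N (v n))).
    rewrite Cmod_sub_sym in HN. specialize (snn (v n) (Xv n)).
    assert ((Cmod (f (v n)) - INR m) / (sn k (v n) + 1) * sn k (v n) < Cmod (f (v n)) - INR m).
    { apply Rlt_le_trans with ((Cmod (f (v n)) - INR m) / (sn k (v n) + 1) * (sn k (v n) + 1)).
      apply Rmult_lt_compat_l; auto. lra. right. field. lra. }
    lra.
  - intros f Yf. destruct (Hw f (YE_dual k f Yf)) as [M HM]. destruct (INR_unbounded M) as [m Hm].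
    exists m. intros n. specialize (HM n). lra.
  - exists (2 * INR m / r). intros n.
    destruct (HB_point k (v n) (Xv n)) as [G [Glin [Gb Gv]]].
    pose proof Yf0 as [f0lin [c0 [Hc0 Hb0]]].
    set (hh := fun u => Cplus (f0 u) (Cmult (RtoC r) (G u))).
    assert (Yh : YE k hh).
    { split. split.
      - intros a b Xa Xb. unfold hh. rewrite (proj1 f0lin), (proj1 Glin); auto. ring.
      - intros c a Xa. unfold hh. rewrite (proj2 f0lin), (proj2 Glin); auto. ring.
      - exists (c0 + r). split. lra. intros u Xu. unfold hh. eapply Rle_trans. apply Cmod_triangle.
        rewrite Cmod_mult, Cmod_R, Rabs_right by lra. pose proof (Hb0 u Xu). pose proof (Gb u Xu).
        pose proof (snn u Xu). nra. }
    assert (Ch : Cs m hh).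
    { apply Hball; auto. intros j _ u Xu. unfold hh.
      replace (Cminus (Cplus (f0 u) (Cmult (RtoC r) (G u))) (f0 u)) with (Cmult (RtoC r) (G u)) by ring.
      rewrite Cmod_mult, Cmod_R, Rabs_right by lra. apply Rmult_le_compat_l. lra. auto. }
    assert (Cf0 : Cs m f0).
    { apply Hball; auto. intros j _ u Xu.
      replace (Cminus (f0 u) (f0 u)) with (RtoC 0) by ring. rewrite Cmod_0. specialize (snn u Xu). nra. }
    specialize (Ch n). specialize (Cf0 n). unfold hh in Ch. rewrite Gv in Ch.
    assert (E : Cmult (RtoC r) (RtoC (sn k (v n))) = Cminus (Cplus (f0 (v n)) (Cmult (RtoC r) (RtoC (sn k (v n))))) (f0 (v n))) by ring.
    assert (Cmod (Cmult (RtoC r) (RtoC (sn k (v n)))) <= 2 * INR m).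
    { rewrite E. eapply Rle_trans. apply (Cmod_tri_sub _ (RtoC 0)).
      replace (Cminus (RtoC 0) (f0 (v n))) with (Copp (f0 (v n))) by ring. rewrite Cmod_opp.
      replace (Cminus (Cplus (f0 (v n)) (Cmult (RtoC r) (RtoC (sn k (v n))))) (RtoC 0)) with
        (Cplus (f0 (v n)) (Cmult (RtoC r) (RtoC (sn k (v n))))) by ring. lra. }
    rewrite Cmod_mult, !Cmod_R, !Rabs_right in H by (try lra; apply Rle_ge, snn, Xv).
    apply Rmult_le_reg_l with r. auto.
    replace (r * (2 * INR m / r)) with (2 * INR m) by (field; lra). auto.
Qed.
End Mackey.


Lemma csum_delta2 (a : nat -> C) j N :
  csum (fun i => Cmult (a i) (delta j i)) N = if Nat.ltb j N then a j else RtoC 0.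
Proof.
  induction N; simpl. auto.
  rewrite IHN. unfold delta.
  destruct (Nat.ltb_spec j N); destruct (Nat.ltb_spec j (S N)); destruct (Nat.eqb_spec N j);
  try lia; subst; ring.
Qed.

Lemma phi_add a b : in_phi a -> in_phi b -> in_phi (sadd a b).
Proof. intros [N1 H1] [N2 H2]. exists (max N1 N2). intros j Hj. unfold sadd. rewrite H1, H2 by lia. ring. Qed.

Lemma phi_scal c a : in_phi a -> in_phi (sscal c a).
Proof. intros [N H]. exists N. intros j Hj. unfold sscal. rewrite H by lia. ring. Qed.

Lemma phi_zero : in_phi szero.
Proof. exists 0%nat. intros; reflexivity. Qed.

Lemma Un_cv_plus0 (a b : nat -> R) : Un_cv a 0 -> Un_cv b 0 -> Un_cv (fun n => a n + b n) 0.
Proof. intros. replace 0 with (0 + 0) by ring. apply CV_plus; auto. Qed.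

Section Closure.
Variables (X : cseq -> Prop) (sn : nat -> cseq -> R).
Hypothesis HFK : is_FK X sn.
Hypothesis Hphi : forall x, in_phi x -> X x.

Lemma seq_conv_const x : X x -> seq_conv sn (fun _ => x) x.
Proof.
  intros Xx k eps He. exists 0%nat. intros n _. unfold R_dist.
  replace (ssub x x) with szero by (cext; ring). rewrite sn_zero with (X := X); auto.
  rewrite Rminus_0_r, Rabs_R0. auto.
Qed.

Lemma psum_cv (u : nat -> cseq) x K : (forall n, X (u n)) -> X x -> seq_conv sn u x ->
  Un_cv (fun n => psum sn K (ssub (u n) x)) 0.
Proof. intros. unfold psum. apply (rsum_cv0 (fun n j => sn j (ssub (u n) x))). intros; auto. Qed.

Lemma psum_tri K a b : X a -> X b -> psum sn K (sadd a b) <= psum sn K a + psum sn K b.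
Proof. intros. unfold psum. rewrite <- rsum_plus. apply rsum_le. intros. apply sn_tri with X; auto. Qed.

Lemma psum_hom K c a : X a -> psum sn K (sscal c a) = Cmod c * psum sn K a.
Proof.
  intros. unfold psum. rewrite <- rsum_scal. induction (S K); simpl; auto.
  rewrite IHn. rewrite sn_hom with (X := X); auto.
Qed.

Lemma psum_sym K a b : X a -> X b -> psum sn K (ssub a b) = psum sn K (ssub b a).
Proof.
  intros. unfold psum. induction (S K); simpl; auto. rewrite IHn. rewrite sn_sub_sym with (X := X); auto.
Qed.

Lemma sn_ssub_le k a b : X a -> X b -> sn k (ssub a b) <= sn k a + sn k b.
Proof.
  intros. rewrite ssub_alt. eapply Rle_trans. apply sn_tri with X; auto. apply X_scal with sn; auto.
  rewrite sn_opp with (X := X); auto. lra.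
Qed.

Lemma conv_bound (u : nat -> cseq) x (b : nat -> nat -> R) : (forall n, X (u n)) -> X x ->
  (forall k n, sn k (ssub (u n) x) <= b k n) -> (forall k, Un_cv (b k) 0) -> seq_conv sn u x.
Proof.
  intros Xu Xx Hb Hc k. apply Un_cv_squeeze0 with (b k); auto. intros n. split; auto.
  apply sn_nonneg with X; auto. apply X_sub with sn; auto.
Qed.

Lemma closure_zero : phi_closure X sn szero.
Proof. split. apply X_zero with sn; auto. exists (fun _ => szero). split. intros; apply phi_zero. apply seq_conv_const. apply X_zero with sn; auto. Qed.

Lemma closure_phi v : in_phi v -> phi_closure X sn v.
Proof. intros Hv. split; auto. exists (fun _ => v). split; auto. apply seq_conv_const; auto. Qed.

Lemma closure_add a b : phi_closure X sn a -> phi_closure X sn b -> phi_closure X sn (sadd a b).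
Proof.
  intros [Xa [ua [Pa Ca]]] [Xb [ub [Pb Cb]]]. split. apply X_add with sn; auto.
  exists (fun n => sadd (ua n) (ub n)). split. intros; apply phi_add; auto.
  apply conv_bound with (fun k n => sn k (ssub (ua n) a) + sn k (ssub (ub n) b)).
  intros; apply X_add with sn; auto. apply X_add with sn; auto.
  intros k n. replace (ssub (sadd (ua n) (ub n)) (sadd a b)) with (sadd (ssub (ua n) a) (ssub (ub n) b)) by (cext; ring).
  apply sn_tri with X; auto; apply X_sub with sn; auto.
  intros k. apply Un_cv_plus0; auto.
Qed.

Lemma closure_scal c a : phi_closure X sn a -> phi_closure X sn (sscal c a).
Proof.
  intros [Xa [ua [Pa Ca]]]. split. apply X_scal with sn; auto.
  exists (fun n => sscal c (ua n)). split. intros; apply phi_scal; auto.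
  apply conv_bound with (fun k n => sn k (ssub (ua n) a) * Cmod c).
  intros; apply X_scal with sn; auto. apply X_scal with sn; auto.
  intros k n. replace (ssub (sscal c (ua n)) (sscal c a)) with (sscal c (ssub (ua n) a)) by (cext; ring).
  rewrite sn_hom with (X := X); auto. right; ring. apply X_sub with sn; auto.
  intros k. apply Un_cv_scal0. auto.
Qed.

Lemma closure_complete (u : nat -> cseq) : (forall n, phi_closure X sn (u n)) ->
  (forall k eps, 0 < eps -> exists N : nat, forall m n, (N <= m)%nat -> (N <= n)%nat ->
         sn k (ssub (u m) (u n)) < eps) ->
  exists x, phi_closure X sn x /\ seq_conv sn u x.
Proof.
  intros Hu Hc.
  destruct HFK as [_ [_ [_ [_ [_ [_ [Hcomp _]]]]]]].
  destruct (Hcomp u (fun n => proj1 (Hu n)) Hc) as [x [Xx Cx]].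
  exists x. split; auto. split; auto.
  assert (Ha : forall m, exists a, in_phi a /\ forall j, (j <= m)%nat -> sn j (ssub a (u m)) < / INR (S m)).
  { intros m. destruct (Hu m) as [Xum [v [Pv Cv]]].
    assert (Hfin : forall M, exists N, forall j, (j <= M)%nat -> forall n, (N <= n)%nat -> sn j (ssub (v n) (u m)) < / INR (S m)).
    { induction M.
      - destruct (Cv 0%nat (/ INR (S m))) as [N HN]. apply Rinv_0_lt_compat, lt_0_INR; lia.
        exists N. intros j Hj n Hn. replace j with 0%nat by lia. specialize (HN n Hn). unfold R_dist in HN.
        rewrite Rminus_0_r in HN. pose proof (Rle_abs (sn 0 (ssub (v n) (u m)))). lra.
      - destruct IHM as [N1 HN1]. destruct (Cv (S M) (/ INR (S m))) as [N2 HN2]. apply Rinv_0_lt_compat, lt_0_INR; lia.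
        exists (max N1 N2). intros j Hj n Hn. destruct (Nat.eq_dec j (S M)) as [->|ne].
        + specialize (HN2 n ltac:(lia)). unfold R_dist in HN2. rewrite Rminus_0_r in HN2.
          pose proof (Rle_abs (sn (S M) (ssub (v n) (u m)))). lra.
        + apply HN1; lia. }
    destruct (Hfin m) as [N HN]. exists (v N). split; [apply Pv|]. intros j Hj. apply HN; auto. }
  destruct (choice_nat _ Ha) as [a Hav].
  exists a. split. intros; apply Hav.
  intros k eps He.
  destruct (inv_le_eventually (eps / 2) ltac:(lra)) as [M1 HM1].
  destruct (Cx k (eps / 2) ltac:(lra)) as [M2 HM2].
  exists (max k (max M1 M2)). intros n Hn. unfold R_dist. rewrite Rminus_0_r.
  assert (Xan : X (a n)) by (apply Hphi; apply Hav).
  assert (Xun : X (u n)) by apply Hu.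
  rewrite Rabs_right by (apply Rle_ge, sn_nonneg with X; auto; apply X_sub with sn; auto).
  eapply Rle_lt_trans. apply (sn_sub_tri X sn HFK k (a n) (u n) x); auto.
  destruct Hav with n as [_ H1]. specialize (H1 k ltac:(lia)). specialize (HM1 n ltac:(lia)).
  specialize (HM2 n ltac:(lia)). unfold R_dist in HM2. rewrite Rminus_0_r in HM2.
  pose proof (Rle_abs (sn k (ssub (u n) x))). lra.
Qed.
End Closure.


Lemma Tsec_sscal p q n c a : Tsec p q n (sscal c a) = sscal c (Tsec p q n a).
Proof. apply cseq_ext; intros j. unfold sscal. rewrite !Tsec_eq. ring. Qed.

Lemma Tsec_ssub p q n a b : Tsec p q n (ssub a b) = ssub (Tsec p q n a) (Tsec p q n b).
Proof. apply cseq_ext; intros j. unfold ssub. rewrite !Tsec_eq. ring. Qed.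

Section Main.
Variables (X : cseq -> Prop) (sn : nat -> cseq -> R) (p q : nat -> nat).
Hypothesis HFK : is_FK X sn.
Hypothesis Hphi : forall x, in_phi x -> X x.
Hypothesis Hpq : forall n, (p n < q n)%nat.
Hypothesis Hq : forall M : nat, exists N : nat, forall n, (N <= n)%nat -> (M <= q n)%nat.

Lemma Xd j : X (delta j). Proof. apply Hphi, phi_delta. Qed.
Lemma XT n w : X (Tsec p q n w). Proof. apply Hphi, Tsec_phi. Qed.

Lemma sn_Tn_bound k n w : sn k (Tsec p q n w) <=
  rsum (fun j => Cmod (cc p q n j) * (Cmod (w j) * sn k (delta j))) (q n).
Proof.
  rewrite Tsec_vsum. eapply Rle_trans. apply sn_vsum with X; auto.
  intros; apply X_scal with sn; auto. apply Xd.
  apply rsum_le. intros i _. rewrite sn_hom with (X := X); auto. rewrite Cmod_mult. right; ring. apply Xd.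
Qed.

Lemma coord_cv0 (w : nat -> cseq) : (forall l, X (w l)) -> seq_conv sn w szero ->
  forall j, Un_cv (fun l => Cmod (w l j)) 0.
Proof.
  intros Xw Cw j. pose proof (X_coord X sn HFK w szero Xw (X_zero X sn HFK) Cw j) as H.
  apply Ccv_Un_cv in H. intros eps He. destruct (H eps He) as [N HN]. exists N. intros n Hn.
  specialize (HN n Hn). unfold szero in HN. replace (Cminus (w n j) (RtoC 0)) with (w n j) in HN by ring. auto.
Qed.

Lemma lin_of_dual f : in_dual X sn f -> linX X f.
Proof. intros [H1 [H2 _]]. split; auto. Qed.

Lemma part_a : has_FsigmaK X sn p q -> has_sigmaK sn p q (phi_closure X sn).
Proof.
  intros HF x [Xx [v [Pv Cv]]].
  change (seq_conv sn (fun n => Tsec p q n x) x).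
  assert (Bd : forall w, X w -> forall k, exists M, forall n, sn k (Tsec p q n w) <= M).
  { intros w Xw. apply (mackey X sn HFK (fun n => Tsec p q n w)). intros; apply XT.
    intros f Hf. destruct (HF w Xw f Hf) as [l Hl]. apply Ccv_bounded with l.
    apply Ccv_ext with (fun n => pqmean p q n (fun k => csum (fun j => Cmult (w j) (f (delta j))) k)); auto.
    intros n. symmetry. apply f_Tn with X sn; auto. apply lin_of_dual; auto. }
  intros k.
  destruct (unif_bound X sn HFK X (fun y H => H) (X_zero X sn HFK) (X_add X sn HFK) (X_scal X sn HFK))
    with (I := nat) (rho := fun n w => sn k (Tsec p q n w)) as [K [Cst [HC HB]]].
  - apply HFK.
  - intros n a t Xa Ht. cbv beta. rewrite Tsec_sscal. apply (sn_rscal X sn HFK); [lra | apply XT].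
  - intros n a b Xa Xb. cbv beta. rewrite Tsec_ssub. apply (sn_ssub_le X sn HFK); apply XT.
  - intros n a b Xa Xb. cbv beta. rewrite Tsec_ssub. apply (sn_rev X sn HFK); apply XT.
  - intros n w Xw Cw. cbv beta.
    apply Un_cv_squeeze0 with (fun l => rsum (fun j => Cmod (cc p q n j) * (Cmod (w l j) * sn k (delta j))) (q n)).
    intros l. split. apply sn_nonneg with X; auto. apply XT. apply sn_Tn_bound.
    apply (rsum_cv0 (fun l j => Cmod (cc p q n j) * (Cmod (w l j) * sn k (delta j)))).
    intros j _. 
    apply Un_cv_squeeze0 with (fun l => Cmod (w l j) * (Cmod (cc p q n j) * sn k (delta j))).
    intros l. pose proof (Cmod_ge_0 (cc p q n j)). pose proof (Cmod_ge_0 (w l j)).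
    pose proof (sn_nonneg X sn HFK k (delta j) (Xd j)). cbv beta. split. apply Rmult_le_pos; auto; apply Rmult_le_pos; auto. right; ring.
    apply Un_cv_scal0. apply coord_cv0; auto.
  - intros a Xa. destruct (Bd a Xa k) as [M HM]. exists M. auto.
  -
    intros eps He.
    assert (Hv : forall l, X (v l)) by (intros; apply Hphi; auto).
    assert (P1 : Un_cv (fun l => psum sn K (ssub (v l) x)) 0) by (apply (psum_cv X sn); auto).
    destruct (P1 (eps / (3 * (Cst + 1)))) as [N1 HN1]. apply Rdiv_lt_0_compat; lra.
    destruct (Cv k (eps / 3)) as [N2 HN2]. lra.
    set (l := max N1 N2).
    specialize (HN1 l ltac:(unfold l; lia)). specialize (HN2 l ltac:(unfold l; lia)).
    unfold R_dist in HN1, HN2. rewrite Rminus_0_r in HN1, HN2.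
    rewrite Rabs_right in HN1 by (apply Rle_ge, psum_nonneg with X; auto; apply X_sub with sn; auto).
    rewrite Rabs_right in HN2 by (apply Rle_ge, sn_nonneg with X; auto; apply X_sub with sn; auto).
    destruct (Tsec_cv_phi X sn HFK Hphi p q Hpq Hq (v l) (Pv l) k (eps / 3)) as [N3 HN3]. lra.
    exists N3. intros n Hn. specialize (HN3 n Hn). unfold R_dist in *. rewrite Rminus_0_r in *.
    rewrite Rabs_right in HN3 by (apply Rle_ge, sn_nonneg with X; auto; apply X_sub with sn; auto; apply XT).
    rewrite Rabs_right by (apply Rle_ge, sn_nonneg with X; auto; apply X_sub with sn; auto; apply XT).
    eapply Rle_lt_trans. apply (sn_sub_tri X sn HFK k _ (Tsec p q n (v l))); auto; apply XT.
    eapply Rle_lt_trans. apply Rplus_le_compat_l. apply (sn_sub_tri X sn HFK k _ (v l)); auto; apply XT.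
    rewrite <- Tsec_ssub. pose proof (HB (ssub x (v l)) n ltac:(apply X_sub with sn; auto)) as HBn. cbv beta in HBn.
    rewrite (psum_sym X sn HFK) in HBn; auto.
    assert (Cst * psum sn K (ssub (v l) x) <= eps / 3).
    { apply Rle_trans with ((Cst + 1) * psum sn K (ssub (v l) x)).
      apply Rmult_le_compat_r. apply psum_nonneg with X; auto. apply X_sub with sn; auto. lra.
      apply Rmult_lt_compat_l with (r := Cst + 1) in HN1. 2: lra.
      replace ((Cst + 1) * (eps / (3 * (Cst + 1)))) with (eps / 3) in HN1 by (field; lra). lra. }
    lra.
Qed.

Lemma Cmod_sub_le (a b : C) : Cmod (Cminus a b) <= Cmod a + Cmod b.
Proof. unfold Cminus. eapply Rle_trans. apply Cmod_triangle. rewrite Cmod_opp. lra. Qed.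

Lemma part_b : has_FsigmaK X sn p q -> forall x, X x -> dual_d p q (dual_d p q (phi_closure X sn)) x.
Proof.
  intros HF x Xx z Hz.
  set (gn := fun n (u : cseq) => csum (fun j => Cmult (cc p q n j) (Cmult (z j) (u j))) (q n)).
  assert (Hg : forall u, exists l, phi_closure X sn u -> Ccv (fun n => gn n u) l).
  { intros u. destruct (classic (phi_closure X sn u)) as [Hu|Hu]. 2:{ exists (RtoC 0). intros; contradiction. }
    destruct (Hz u Hu) as [l Hl]. exists l. intros _. eapply Ccv_ext; [|exact Hl].
    intros n. apply mean_csum. }
  destruct (choice_gen _ Hg) as [G HG].
  assert (gadd : forall n a b, gn n (sadd a b) = Cplus (gn n a) (gn n b)).
  { intros n a b. unfold gn. rewrite <- csum_plus. apply csum_ext_lt. intros; unfold sadd; ring. }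
  assert (gscal : forall n c a, gn n (sscal c a) = Cmult c (gn n a)).
  { intros n c a. unfold gn. rewrite <- csum_scal. apply csum_ext_lt. intros; unfold sscal; ring. }
  assert (gsub : forall n a b, gn n (ssub a b) = Cminus (gn n a) (gn n b)).
  { intros n a b. rewrite ssub_alt, gadd, gscal. ring. }
  assert (YX : forall u, phi_closure X sn u -> X u) by (intros u [H _]; auto).
  destruct (unif_bound X sn HFK (phi_closure X sn) YX (closure_zero X sn HFK)
     (closure_add X sn HFK Hphi) (closure_scal X sn HFK Hphi) (closure_complete X sn HFK Hphi) nat
     (fun n u => Cmod (gn n u))) as [K [Cst [HC HB]]].
  - intros n a t _ Ht. rewrite gscal, Cmod_mult. rewrite Cmod_RtoC_pos; lra.
  - intros n a b _ _. rewrite gsub. apply Cmod_sub_le.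
  - intros n a b _ _. rewrite gsub. apply Cmod_rev_tri.
  - intros n w Yw Cw.
    apply Un_cv_squeeze0 with (fun l => rsum (fun j => Cmod (w l j) * (Cmod (cc p q n j) * Cmod (z j))) (q n)).
    + intros l. split. apply Cmod_ge_0. unfold gn. eapply Rle_trans. apply csum_mod.
      apply rsum_le. intros j _. rewrite !Cmod_mult. right; ring.
    + apply (rsum_cv0 (fun l j => Cmod (w l j) * (Cmod (cc p q n j) * Cmod (z j)))).
      intros j _. apply Un_cv_scal0. apply coord_cv0; auto.
  - intros a Ya. destruct (Ccv_bounded _ _ (HG a Ya)) as [M HM]. exists M. auto.
  - assert (Gb : forall u, phi_closure X sn u -> Cmod (G u) <= Cst * psum sn K u).
    { intros u Hu. apply (Ccv_le0 (fun n => gn n u)). auto. intros n. apply (HB u n Hu). }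
    assert (Gadd : forall a b, phi_closure X sn a -> phi_closure X sn b -> G (sadd a b) = Cplus (G a) (G b)).
    { intros a b Ha Hb. apply (Ccv_unique (fun n => gn n (sadd a b))). apply HG. apply (closure_add X sn HFK Hphi); auto.
      eapply Ccv_ext. intros n; symmetry; apply gadd. apply Ccv_plus; auto. }
    assert (Gscal : forall c a, phi_closure X sn a -> G (sscal c a) = Cmult c (G a)).
    { intros c a Ha. apply (Ccv_unique (fun n => gn n (sscal c a))). apply HG. apply (closure_scal X sn HFK Hphi); auto.
      eapply Ccv_ext. intros n; symmetry; apply gscal. apply Ccv_scal; auto. }
    destruct (complex_HB X (fun u => Cst * psum sn K u) (phi_closure X sn) G) as [f [flin [fext fb]]].
    + exact (X_zero X sn HFK).
    + exact (X_add X sn HFK).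
    + exact (X_scal X sn HFK).
    + intros a b Xa Xb. pose proof (psum_tri X sn HFK K a b Xa Xb). nra.
    + intros c a Xa. rewrite (psum_hom X sn HFK); auto. ring.
    + intros a Xa. pose proof (psum_nonneg X sn HFK K a Xa). nra.
    + auto.
    + apply (closure_zero X sn HFK).
    + apply (closure_add X sn HFK Hphi).
    + apply (closure_scal X sn HFK Hphi).
    + auto.
    + auto.
    + auto.
    + assert (Hf : in_dual X sn f).
      { destruct flin as [fadd fscal]. split; auto. split; auto.
        intros u x0 Xu Xx0 Hc eps He.
        destruct (psum_cv X sn u x0 K Xu Xx0 Hc (eps / (Cst + 1))) as [N HN]. apply Rdiv_lt_0_compat; lra.
        exists N. intros n Hn. specialize (HN n Hn). unfold R_dist in HN. rewrite Rminus_0_r in HN.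
        rewrite <- (lin_sub X sn HFK f (u n) x0) by (auto; split; auto).
        eapply Rle_lt_trans. apply fb. apply X_sub with sn; auto.
        pose proof (psum_nonneg X sn HFK K (ssub (u n) x0) ltac:(apply X_sub with sn; auto)).
        rewrite Rabs_right in HN by lra.
        apply Rle_lt_trans with ((Cst + 1) * psum sn K (ssub (u n) x0)). nra.
        apply Rmult_lt_compat_l with (r := Cst + 1) in HN; [|lra].
        replace ((Cst + 1) * (eps / (Cst + 1))) with eps in HN by (field; lra). auto. }
      assert (fd : forall j, f (delta j) = z j).
      { intros j. assert (Pd : phi_closure X sn (delta j)) by (apply (closure_phi X sn HFK Hphi); apply phi_delta).
        rewrite fext by auto. apply (Ccv_unique (fun n => gn n (delta j))). apply HG; auto.
        apply Ccv_ext with (fun n => Cmult (z j) (cc p q n j)).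
        - intros n. unfold gn.
          rewrite (csum_ext_lt _ (fun i => Cmult (Cmult (cc p q n i) (z i)) (delta j i))) by (intros; ring).
          rewrite csum_delta2. destruct (Nat.ltb_spec j (q n)). ring. rewrite cc_zero by lia. ring.
        - assert (Hcc := Ccv_scal _ _ (z j) (cc_cv p q Hpq Hq j)).
          replace (Cmult (z j) (RtoC 1)) with (z j) in Hcc by ring. exact Hcc. }
      destruct (HF x Xx f Hf) as [l Hl]. exists l.
      assert (E : (fun j => Cmult (x j) (f (delta j))) = (fun j => Cmult (x j) (z j))).
      { extensionality j. rewrite fd. auto. }
      rewrite E in Hl. exact Hl.
Qed.

Lemma part_c : has_sigmaK sn p q (phi_closure X sn) ->
  (forall x, X x -> dual_d p q (dual_d p q (phi_closure X sn)) x) -> has_FsigmaK X sn p q.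
Proof.
  intros Ha Hb x Xx f Hf. apply (Hb x Xx (fun j => f (delta j))).
  intros y Hy. exists (f y).
  pose proof (Ha y Hy) as Hc. change (seq_conv sn (fun n => Tsec p q n y) y) in Hc.
  destruct Hf as [f1 [f2 f3]].
  pose proof (f3 (fun n => Tsec p q n y) y (fun n => XT n y) (proj1 Hy) Hc) as Hl.
  eapply Ccv_ext; [|exact Hl]. intros n. cbv beta. rewrite f_Tn with (X := X) (sn := sn); auto.
  f_equal. extensionality k. apply csum_ext_lt. intros; ring. split; auto.
Qed.
End Main.

Theorem mainTheorem14 (X : cseq -> Prop) (sn : nat -> cseq -> R) (p q : nat -> nat) :
  is_FK X sn ->
  (forall x, in_phi x -> X x) ->
  (forall n, (p n < q n)%nat) ->
  (forall M : nat, exists N : nat, forall n, (N <= n)%nat -> (M <= q n)%nat) ->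
  (has_FsigmaK X sn p q <->
   (has_sigmaK sn p q (phi_closure X sn) /\
    forall x, X x -> dual_d p q (dual_d p q (phi_closure X sn)) x)).
Proof.
  intros HFK Hphi Hpq Hq. split.
  - intros HF. split. apply part_a; auto. apply part_b; auto.
  - intros [Ha Hb]. eapply part_c; eauto.
Qed.
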